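(* Let $H$ be a non-total attractor hull of a $k$-oriented Spherical Diagram $\mathcal D$, and let $x$ be a point of intersection between an arc of $\mathcal D$ and the interior of $H$. Then there are three distinct arcs of $\mathcal D$ that thrust the boundary of $H$ at three distinct points, not all lying on the same edge of $H$, each of which is internally $H$-connected (with respect to $\mathcal D$) with $x$.
   Context: A geodesic arc on the unit sphere in $\mathbb R^3$ is the unique shortest curve joining two non-antipodal points. An arc $a$ blocks an arc $b$ (equivalently, $b$ hits $a$) if an endpoint of $b$ lies in the relative interior of $a$. A Spherical Diagram (SD) is a finite non-empty collection $\mathcal D$ of pairwise interior-disjoint geodesic arcs on the unit sphere such that each arc of $\mathcal D$ is blocked by arcs of $\mathcal D$ at each of its endpoints. An SD $\mathcal D$ is $k$-oriented if there exist a set $P$ of $k$ points on the unit sphere (poles), no two antipodal, and a function $f\colon\mathcal D\to P$ such that each arc $a\in\mathcal D$ lies on a great circle through $f(a)$ but contains neither $f(a)$ nor its antipode $-f(a)$ (the anti-pole of $f(a)$). An attractor of a $k$-oriented SD is a set of $k$ points, no two antipodal, chosen among its poles and anti-poles. An attractor hull is the spherical convex hull of an attractor; it is total if it is the whole sphere (otherwise it is a spherical polygon contained in the interior of a hemisphere). For a spherical polygon $R$ contained in the interior of a hemisphere, an arc $a$ thrusts the boundary of $R$ at a point $y$ if $y\in a\cap\partial R$ and $a$ also intersects the interior of $R$. For a region $R$, two points are internally $R$-connected (with respect to $\mathcal D$) if there is a path between them contained in the union of the arcs of $\mathcal D$, all of whose points except possibly its endpoints lie in the interior of $R$. *)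

(* Defs.v *)
From Stdlib Require Import Reals Lra List.
Open Scope R_scope.

Record pt := mkpt { px : R; py : R; pz : R }.

Definition padd (p q : pt) : pt := mkpt (px p + px q) (py p + py q) (pz p + pz q).
Definition pscale (t : R) (p : pt) : pt := mkpt (t * px p) (t * py p) (t * pz p).
Definition popp (p : pt) : pt := pscale (-1) p.
Definition pzero : pt := mkpt 0 0 0.
Definition dot (p q : pt) : R := px p * px q + py p * py q + pz p * pz q.
Definition dist (p q : pt) : R :=
  sqrt ((px p - px q)^2 + (py p - py q)^2 + (pz p - pz q)^2).

Definition on_sphere (p : pt) : Prop := dot p p = 1.

(* An arc is given by its two endpoints; it is the shortest curve joining
   them, i.e. the set of unit vectors a*u + b*v with a, b >= 0. *)
Record arc := mkarc { asrc : pt; adst : pt }.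

Definition arc_wf (a : arc) : Prop :=
  on_sphere (asrc a) /\ on_sphere (adst a) /\
  asrc a <> adst a /\ asrc a <> popp (adst a).

Definition on_arc (a : arc) (p : pt) : Prop :=
  on_sphere p /\ exists s t, 0 <= s /\ 0 <= t /\
    p = padd (pscale s (asrc a)) (pscale t (adst a)).

Definition in_relint (a : arc) (p : pt) : Prop :=
  on_sphere p /\ exists s t, 0 < s /\ 0 < t /\
    p = padd (pscale s (asrc a)) (pscale t (adst a)).

Definition is_endpoint (b : arc) (e : pt) : Prop := e = asrc b \/ e = adst b.

Definition SD (D : list arc) : Prop :=
  D <> nil /\
  (forall a, In a D -> arc_wf a) /\
  (forall a b p, In a D -> In b D -> a <> b -> in_relint a p -> ~ in_relint b p) /\
  (forall b e, In b D -> is_endpoint b e -> exists a, In a D /\ in_relint a e).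

Definition antipodal (p q : pt) : Prop := q = popp p.

Definition cross (p q : pt) : pt :=
  mkpt (py p * pz q - pz p * py q) (pz p * px q - px p * pz q)
       (px p * py q - py p * px q).
Definition on_great_circle_of (a : arc) (p : pt) : Prop :=
  dot (cross (asrc a) (adst a)) p = 0.

Definition oriented (D : list arc) (k : nat) (P : list pt) (f : arc -> pt) : Prop :=
  length P = k /\ NoDup P /\
  (forall p, In p P -> on_sphere p) /\
  (forall p q, In p P -> In q P -> ~ antipodal p q) /\
  (forall a, In a D ->
     In (f a) P /\ on_great_circle_of a (f a) /\
     ~ on_arc a (f a) /\ ~ on_arc a (popp (f a))).

Definition attractor (k : nat) (P : list pt) (A : list pt) : Prop :=
  length A = k /\ NoDup A /\
  (forall x, In x A -> In x P \/ In (popp x) P) /\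
  (forall p q, In p A -> In q A -> ~ antipodal p q).

Fixpoint in_cone (A : list pt) (p : pt) : Prop :=
  match A with
  | nil => p = pzero
  | a :: A' => exists t q, 0 <= t /\ in_cone A' q /\ p = padd (pscale t a) q
  end.

Definition sph_hull (A : list pt) (p : pt) : Prop := on_sphere p /\ in_cone A p.

Definition total (H : pt -> Prop) : Prop := forall p, on_sphere p -> H p.

Definition in_open_hemisphere (H : pt -> Prop) : Prop :=
  exists c, forall p, H p -> dot c p > 0.

Definition sph_interior (H : pt -> Prop) (p : pt) : Prop :=
  on_sphere p /\ exists eps, eps > 0 /\
    forall q, on_sphere q -> dist p q < eps -> H q.

Definition sph_boundary (H : pt -> Prop) (p : pt) : Prop :=
  on_sphere p /\ forall eps, eps > 0 ->
    (exists q, on_sphere q /\ dist p q < eps /\ H q) /\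
    (exists q, on_sphere q /\ dist p q < eps /\ ~ H q).

(* edges of a spherical polygon H: intersections of H with a supporting
   great circle {p | n.p = 0} (H on the side n.p >= 0) that contain at
   least two points *)
Definition edge_normal (H : pt -> Prop) (n : pt) : Prop :=
  n <> pzero /\ (forall q, H q -> dot n q >= 0) /\
  exists q1 q2, q1 <> q2 /\ H q1 /\ H q2 /\ dot n q1 = 0 /\ dot n q2 = 0.

Definition on_edge (H : pt -> Prop) (n : pt) (p : pt) : Prop := H p /\ dot n p = 0.

Definition thrusts (a : arc) (H : pt -> Prop) (y : pt) : Prop :=
  on_arc a y /\ sph_boundary H y /\ exists z, on_arc a z /\ sph_interior H z.

Definition path_continuous (g : R -> pt) : Prop :=
  forall t, 0 <= t <= 1 -> forall eps, eps > 0 -> exists delta, delta > 0 /\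
    forall s, 0 <= s <= 1 -> Rabs (s - t) < delta -> dist (g s) (g t) < eps.

Definition int_connected (D : list arc) (H : pt -> Prop) (x y : pt) : Prop :=
  exists g : R -> pt, path_continuous g /\ g 0 = x /\ g 1 = y /\
    (forall t, 0 <= t <= 1 -> exists a, In a D /\ on_arc a (g t)) /\
    (forall t, 0 < t < 1 -> sph_interior H (g t)).

(* Main.v *)
Require Import Defs.
From Stdlib Require Import Reals List.
From Stdlib Require Import Lra Lia Psatz Classical ClassicalEpsilon.
Require Import Defs.
Open Scope R_scope.

Lemma pt_ext : forall p q : pt, px p = px q -> py p = py q -> pz p = pz q -> p = q.
Proof. intros [a b c] [d e f]; simpl; intros; subst; reflexivity. Qed.

Definition vsub (p q : pt) : pt := mkpt (px p - px q) (py p - py q) (pz p - pz q).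
Definition nrm (v : pt) : R := sqrt (dot v v).
Definition normz (v : pt) : pt := pscale (/ nrm v) v.

Ltac vunf := unfold dot, padd, pscale, popp, vsub, cross, pzero in *; simpl in *.
Ltac vext := apply pt_ext; vunf; try field; try ring.
Ltac vring := apply pt_ext; vunf; ring.

Lemma dot_ge0 : forall v, 0 <= dot v v.
Proof. intros [a b c]; vunf; nra. Qed.

Lemma dot_eq0 : forall v, dot v v = 0 -> v = pzero.
Proof. intros [a b c] H; vunf; apply pt_ext; simpl; nra. Qed.

Lemma dot_sym : forall a b, dot a b = dot b a.
Proof. intros [] []; vunf; ring. Qed.

Lemma dot_addl : forall a b c, dot (padd a b) c = dot a c + dot b c.
Proof. intros [] [] []; vunf; ring. Qed.
Lemma dot_addr : forall a b c, dot c (padd a b) = dot c a + dot c b.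
Proof. intros [] [] []; vunf; ring. Qed.
Lemma dot_scalel : forall t a b, dot (pscale t a) b = t * dot a b.
Proof. intros t [] []; vunf; ring. Qed.
Lemma dot_scaler : forall t a b, dot a (pscale t b) = t * dot a b.
Proof. intros t [] []; vunf; ring. Qed.
Lemma dot_subl : forall a b c, dot (vsub a b) c = dot a c - dot b c.
Proof. intros [] [] []; vunf; ring. Qed.
Lemma dot_subr : forall a b c, dot c (vsub a b) = dot c a - dot c b.
Proof. intros [] [] []; vunf; ring. Qed.
Lemma dot_zerol : forall a, dot pzero a = 0.
Proof. intros []; vunf; ring. Qed.
Lemma dot_zeror : forall a, dot a pzero = 0.
Proof. intros []; vunf; ring. Qed.
Lemma dot_poppl : forall a b, dot (popp a) b = - dot a b.
Proof. intros [] []; vunf; ring. Qed.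
Lemma dot_poppr : forall a b, dot a (popp b) = - dot a b.
Proof. intros [] []; vunf; ring. Qed.

Lemma CS : forall a b, (dot a b) * (dot a b) <= dot a a * dot b b.
Proof. intros [a1 a2 a3] [b1 b2 b3]; vunf.
  assert (E: (a1*a1+a2*a2+a3*a3)*(b1*b1+b2*b2+b3*b3) - (a1*b1+a2*b2+a3*b3)*(a1*b1+a2*b2+a3*b3)
    = (a2*b3-a3*b2)*(a2*b3-a3*b2) + (a3*b1-a1*b3)*(a3*b1-a1*b3) + (a1*b2-a2*b1)*(a1*b2-a2*b1)) by ring.
  pose proof (Rle_0_sqr (a2*b3-a3*b2)); pose proof (Rle_0_sqr (a3*b1-a1*b3));
  pose proof (Rle_0_sqr (a1*b2-a2*b1)); unfold Rsqr in *; lra. Qed.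

Lemma sq_le : forall x y, 0 <= y -> x * x <= y * y -> x <= y.
Proof. intros; nra. Qed.
Lemma sq_eq : forall x y, 0 <= x -> 0 <= y -> x * x = y * y -> x = y.
Proof. intros; nra. Qed.

Lemma nrm_ge0 : forall v, 0 <= nrm v.
Proof. intros; apply sqrt_pos. Qed.
Lemma nrm_sq : forall v, nrm v * nrm v = dot v v.
Proof. intros; unfold nrm; apply sqrt_sqrt, dot_ge0. Qed.
Lemma nrm_pos : forall v, 0 < dot v v -> 0 < nrm v.
Proof. intros; unfold nrm; apply sqrt_lt_R0; auto. Qed.
Lemma nrm_unit : forall v, on_sphere v -> nrm v = 1.
Proof. intros v H; unfold nrm, on_sphere in *; rewrite H; apply sqrt_1. Qed.

Lemma dot_le_nrm : forall a b, dot a b <= nrm a * nrm b.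
Proof. intros. pose proof (CS a b). pose proof (nrm_sq a). pose proof (nrm_sq b).
  pose proof (nrm_ge0 a). pose proof (nrm_ge0 b).
  apply sq_le. nra. rewrite <- H0, <- H1 in H. nra. Qed.

Lemma nrm_add : forall a b, nrm (padd a b) <= nrm a + nrm b.
Proof. intros. apply sq_le. pose proof (nrm_ge0 a); pose proof (nrm_ge0 b); lra.
  rewrite nrm_sq. rewrite dot_addl, !dot_addr. rewrite (dot_sym b a).
  pose proof (dot_le_nrm a b). rewrite <- (nrm_sq a), <- (nrm_sq b). nra. Qed.

Lemma nrm_scale : forall t v, nrm (pscale t v) = Rabs t * nrm v.
Proof. intros. apply sq_eq. apply nrm_ge0. pose proof (Rabs_pos t); pose proof (nrm_ge0 v); nra.
  rewrite nrm_sq, dot_scalel, dot_scaler.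
  replace (Rabs t * nrm v * (Rabs t * nrm v)) with ((Rabs t * Rabs t) * (nrm v * nrm v)) by ring.
  rewrite nrm_sq, <- Rabs_mult, Rabs_right. ring. nra. Qed.

Lemma pdist_nrm : forall p q, dist p q = nrm (vsub p q).
Proof. intros [] []; unfold dist, nrm; vunf; f_equal; ring. Qed.

Lemma pdist_ge0 : forall p q, 0 <= dist p q.
Proof. intros; rewrite pdist_nrm; apply nrm_ge0. Qed.

Lemma pdist_sym : forall p q, dist p q = dist q p.
Proof. intros [] []; unfold dist; f_equal; simpl; ring. Qed.

Lemma pdist_tri : forall p q r, dist p r <= dist p q + dist q r.
Proof. intros. rewrite !pdist_nrm.
  replace (vsub p r) with (padd (vsub p q) (vsub q r)) by vext. apply nrm_add. Qed.

Lemma pdist_refl : forall p, dist p p = 0.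
Proof. intros; rewrite pdist_nrm; unfold nrm; vunf. replace (_ + _ + _) with 0 by ring. apply sqrt_0. Qed.

Lemma pdist_eq0 : forall p q, dist p q = 0 -> p = q.
Proof. intros p q H. rewrite pdist_nrm in H. unfold nrm in H.
  apply sqrt_eq_0 in H; [|apply dot_ge0]. apply dot_eq0 in H. destruct p, q; vunf.
  injection H; intros; apply pt_ext; simpl; lra. Qed.

Lemma nrm_sub_rev : forall a b, Rabs (nrm a - nrm b) <= nrm (vsub a b).
Proof. intros. assert (nrm a <= nrm (vsub a b) + nrm b).
  { replace a with (padd (vsub a b) b) at 1 by vext. apply nrm_add. }
  assert (nrm b <= nrm (vsub a b) + nrm a).
  { replace b with (padd (popp (vsub a b)) a) at 1 by vext.
    eapply Rle_trans. apply nrm_add. unfold popp. rewrite nrm_scale.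
    assert (E1: Rabs (-1) = 1) by (rewrite Rabs_left; lra). rewrite E1. lra. }
  apply Rabs_le. lra. Qed.

Lemma normz_unit : forall v, 0 < dot v v -> on_sphere (normz v).
Proof. intros. unfold on_sphere, normz. rewrite dot_scalel, dot_scaler.
  rewrite <- nrm_sq. pose proof (nrm_pos v H). field. lra. Qed.

Lemma normz_of_unit : forall v, on_sphere v -> normz v = v.
Proof. intros. unfold normz. rewrite nrm_unit; auto. rewrite Rinv_1. vext. Qed.

Lemma normz_scale : forall t v, 0 < t -> 0 < dot v v -> normz (pscale t v) = normz v.
Proof. intros. unfold normz. rewrite nrm_scale, Rabs_right by lra.
  pose proof (nrm_pos v H0). apply pt_ext; vunf; field; lra. Qed.

Lemma nrm_vsub_sym : forall a b, nrm (vsub a b) = nrm (vsub b a).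
Proof. intros. rewrite <- !pdist_nrm. apply pdist_sym. Qed.

Lemma normz_lip : forall u w, 0 < dot u u -> 0 < dot w w ->
  nrm (vsub (normz u) (normz w)) <= 2 * nrm (vsub u w) / nrm w.
Proof. intros u w Hu Hw. pose proof (nrm_pos u Hu) as Nu. pose proof (nrm_pos w Hw) as Nw.
  replace (vsub (normz u) (normz w)) with
    (padd (pscale (/ nrm w) (vsub u w)) (pscale (/ nrm u - / nrm w) u)) by (unfold normz; apply pt_ext; vunf; field; lra).
  eapply Rle_trans. apply nrm_add. rewrite !nrm_scale.
  rewrite Rabs_right by (apply Rle_ge, Rlt_le, Rinv_0_lt_compat; lra).
  replace (/ nrm u - / nrm w) with ((nrm w - nrm u) / (nrm u * nrm w)) by (field; lra).
  unfold Rdiv. rewrite Rabs_mult. rewrite (Rabs_right (/ _)) by (apply Rle_ge, Rlt_le, Rinv_0_lt_compat; nra).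
  pose proof (nrm_sub_rev w u). rewrite nrm_vsub_sym in H.
  assert (Rabs (nrm w - nrm u) * / (nrm u * nrm w) * nrm u = Rabs (nrm w - nrm u) / nrm w) by (field; lra).
  rewrite H0. unfold Rdiv.
  assert (Rabs (nrm w - nrm u) * / nrm w <= nrm (vsub u w) * / nrm w).
  { apply Rmult_le_compat_r. left; apply Rinv_0_lt_compat; lra. auto. }
  lra. Qed.

Lemma Rabs_le_between : forall a b, Rabs a <= b -> - b <= a <= b.
Proof. intros a b H. unfold Rabs in H. destruct (Rcase_abs a); lra. Qed.

Lemma cone_zero : forall A, in_cone A pzero.
Proof. induction A; simpl; auto. exists 0, pzero; repeat split; auto; try lra. vext. Qed.

Lemma cone_add : forall A p q, in_cone A p -> in_cone A q -> in_cone A (padd p q).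
Proof. induction A; simpl; intros p q Hp Hq.
  - subst; vext.
  - destruct Hp as [t1 [q1 [H1 [H2 H3]]]]. destruct Hq as [t2 [q2 [H4 [H5 H6]]]].
    exists (t1 + t2), (padd q1 q2). repeat split; try lra. apply IHA; auto. subst; vext. Qed.

Lemma cone_scale : forall A s p, 0 <= s -> in_cone A p -> in_cone A (pscale s p).
Proof. induction A; simpl; intros s p Hs Hp.
  - subst; vext.
  - destruct Hp as [t1 [q1 [H1 [H2 H3]]]]. exists (s * t1), (pscale s q1).
    repeat split. nra. apply IHA; auto. subst; vext. Qed.

Lemma cone_gen : forall A a, In a A -> in_cone A a.
Proof. induction A; simpl; intros b Hb; [contradiction|]. destruct Hb as [<-|Hb].
  - exists 1, pzero. repeat split; try lra. apply cone_zero. vext.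
  - exists 0, b. repeat split; try lra; auto. vext. Qed.

Lemma cone_eq : forall A p q, p = q -> in_cone A p -> in_cone A q.
Proof. intros; subst; auto. Qed.

Lemma cone_unscale : forall A s p, 0 < s -> in_cone A (pscale s p) -> in_cone A p.
Proof. intros. replace p with (pscale (/ s) (pscale s p)). apply cone_scale; auto.
  left; apply Rinv_0_lt_compat; auto. apply pt_ext; vunf; field; lra. Qed.

Definition HypA (A : list pt) (c : pt) (g : R) : Prop :=
  (forall a, In a A -> on_sphere a) /\ 0 < g /\ (forall a, In a A -> g <= dot c a).

Lemma cone_bound : forall A c g, HypA A c g -> forall z, in_cone A z ->
  exists T, 0 <= T /\ g * T <= dot c z /\ dot z z <= T * T.
Proof. intros A c g [HU [Hg HA]]. induction A; simpl; intros z Hz.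
  - subst. exists 0. rewrite dot_zeror, dot_zerol. lra.
  - destruct Hz as [t [q [Ht [Hq E]]]].
    destruct (IHA ltac:(intros; apply HU; simpl; auto) ltac:(intros; apply HA; simpl; auto) q Hq) as [T [HT [H1 H2]]].
    exists (t + T). subst z. repeat (rewrite ?dot_addr, ?dot_scaler, ?dot_addl, ?dot_scalel).
    assert (Ua : dot a a = 1) by (apply HU; simpl; auto).
    assert (Ga : g <= dot c a) by (apply HA; simpl; auto).
    pose proof (CS a q). rewrite Ua in H.
    assert (dot a q <= T) by nra. rewrite (dot_sym q a). repeat split; nra. Qed.

Lemma cone_cpos : forall A c g, HypA A c g -> forall z, in_cone A z -> g * nrm z <= dot c z.
Proof. intros. destruct (cone_bound A c g H z H0) as [T [HT [H1 H2]]].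
  destruct H as [_ [Hg _]]. assert (nrm z <= T). { apply sq_le; auto. rewrite nrm_sq; auto. }
  nra. Qed.

Definition ClH (A : list pt) (z : pt) : Prop :=
  on_sphere z /\ forall eps, eps > 0 -> exists w, sph_hull A w /\ dist z w < eps.

Lemma int_sub : forall (S : pt -> Prop) z, sph_interior S z -> S z.
Proof. intros S z [Hz [e [He H]]]. apply H; auto. rewrite pdist_refl; lra. Qed.

Lemma int_open : forall (S : pt -> Prop) z, sph_interior S z -> exists e, e > 0 /\
  forall q, on_sphere q -> dist z q < e -> sph_interior S q.
Proof. intros S z [Hz [e [He H]]]. exists (e/2). split. lra. intros q Hq Hd.
  split; auto. exists (e/2). split. lra. intros r Hr Hd2. apply H; auto.
  pose proof (pdist_tri z q r). lra. Qed.

Lemma bnd_not_int : forall (S : pt -> Prop) y, sph_boundary S y -> ~ sph_interior S y.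
Proof. intros S y [Hy HB] [_ [e [He H]]]. destruct (HB e He) as [_ [q [Hq [Hd HnS]]]].
  apply HnS, H; auto. Qed.

Lemma bnd_cl : forall A y, sph_boundary (sph_hull A) y -> ClH A y.
Proof. intros A y [Hy HB]. split; auto. intros e He. destruct (HB e He) as [[q [Hq [Hd HS]]] _].
  exists q; auto. Qed.

Lemma int_cl : forall A y, sph_interior (sph_hull A) y -> ClH A y.
Proof. intros A y Hi. pose proof (int_sub _ _ Hi). split. destruct Hi; auto.
  intros e He. exists y. split; auto. rewrite pdist_refl; lra. Qed.

Lemma dot_diff_bound : forall c y w, Rabs (dot c y - dot c w) <= nrm c * dist y w.
Proof. intros. rewrite pdist_nrm. rewrite <- dot_subr.
  pose proof (dot_le_nrm c (vsub y w)). pose proof (dot_le_nrm (popp c) (vsub y w)).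
  unfold popp in H0. rewrite dot_scalel, nrm_scale in H0.
  assert (E1: Rabs (-1) = 1) by (rewrite Rabs_left; lra). rewrite E1 in H0.
  apply Rabs_le. lra. Qed.

Lemma cl_cpos : forall A c g, HypA A c g -> forall y, ClH A y -> g <= dot c y.
Proof. intros A c g HA y [Hy HC]. destruct (Rle_lt_dec g (dot c y)) as [|Hlt]; auto.
  exfalso. pose proof (nrm_ge0 c).
  destruct (HC ((g - dot c y) / (nrm c + 1))) as [w [[Hw Hwc] Hd]].
  { apply Rdiv_lt_0_compat; lra. }
  pose proof (cone_cpos A c g HA w Hwc). rewrite nrm_unit in H0 by auto.
  pose proof (dot_diff_bound c y w). apply Rabs_le_between in H1 as [H1 H2].
  assert (nrm c * dist y w <= nrm c * ((g - dot c y) / (nrm c + 1))).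
  { apply Rmult_le_compat_l; lra. }
  assert (nrm c * ((g - dot c y) / (nrm c + 1)) < g - dot c y).
  { unfold Rdiv. rewrite <- Rmult_assoc. apply Rlt_le_trans with (1 * (g - dot c y)); [|lra].
    rewrite (Rmult_comm _ (g - _)), (Rmult_comm 1). rewrite Rmult_assoc. apply Rmult_lt_compat_l. lra.
    apply Rmult_lt_reg_r with (nrm c + 1). lra. rewrite Rmult_assoc, Rinv_l by lra. lra. }
  lra. Qed.

Lemma L1c : forall A z w l m, sph_interior (sph_hull A) z -> ClH A w -> 0 < l -> 0 <= m ->
  0 < dot (padd (pscale l z) (pscale m w)) (padd (pscale l z) (pscale m w)) ->
  sph_interior (sph_hull A) (normz (padd (pscale l z) (pscale m w))).
Proof.
  intros A z w l m Hz Hw Hl Hm Hp.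
  set (p := padd (pscale l z) (pscale m w)) in *.
  destruct Hz as [Zs [e0 [He0 HZ]]].
  set (e := Rmin e0 1).
  assert (He : 0 < e) by (unfold e; apply Rmin_glb_lt; lra).
  assert (Hee0 : e <= e0) by apply Rmin_l. assert (He1 : e <= 1) by apply Rmin_r.
  set (L := nrm p). assert (HL : 0 < L) by (apply nrm_pos; auto).
  destruct Hw as [Ws HW].
  destruct (HW (e * l / (4 * (m + 1)))) as [w' [[Hw's Hw'c] Hdw]].
  { apply Rlt_gt. apply Rdiv_lt_0_compat; nra. }
  split. apply normz_unit; auto.
  exists (e * l / (4 * L)). split. apply Rlt_gt, Rdiv_lt_0_compat; nra.
  intros q Hq Hdq. split; auto.
  set (v := padd (pscale L q) (pscale (- m) w')).
  set (r := pscale (/ l) v).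
  assert (Ep : pscale L (normz p) = p).
  { unfold normz. fold L. apply pt_ext; vunf; field; lra. }
  assert (Erz : vsub r z = pscale (/ l) (padd (pscale L (vsub q (normz p))) (pscale m (vsub w w')))).
  { unfold r, v. unfold p at 2 in Ep.
    pose proof (f_equal px Ep) as E1. pose proof (f_equal py Ep) as E2. pose proof (f_equal pz Ep) as E3.
    clearbody p. vunf. apply pt_ext; simpl.
    - replace (L * (px q - / nrm p * px p)) with (L * px q - (l * px z + m * px w)) by (rewrite <- E1; ring). field; lra.
    - replace (L * (py q - / nrm p * py p)) with (L * py q - (l * py z + m * py w)) by (rewrite <- E2; ring). field; lra.
    - replace (L * (pz q - / nrm p * pz p)) with (L * pz q - (l * pz z + m * pz w)) by (rewrite <- E3; ring). field; lra. }
  assert (Nrz : nrm (vsub r z) < e / 2).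
  { rewrite Erz, nrm_scale. rewrite Rabs_right by (left; apply Rinv_0_lt_compat; lra).
    pose proof (nrm_add (pscale L (vsub q (normz p))) (pscale m (vsub w w'))).
    rewrite !nrm_scale in H. rewrite (Rabs_right L) in H by lra. rewrite (Rabs_right m) in H by lra.
    rewrite <- !pdist_nrm in H. rewrite pdist_sym in Hdq.
    assert (L * dist q (normz p) < L * (e * l / (4 * L))) by (apply Rmult_lt_compat_l; lra).
    replace (L * (e * l / (4 * L))) with (e * l / 4) in H0 by (field; lra).
    assert (m * dist w w' <= (m + 1) * (e * l / (4 * (m + 1)))).
    { apply Rmult_le_compat; try lra. apply pdist_ge0. }
    replace ((m + 1) * (e * l / (4 * (m + 1)))) with (e * l / 4) in H1 by (field; lra).
    apply Rmult_lt_reg_l with l; auto. rewrite <- Rmult_assoc, Rinv_r by lra. lra. }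
  assert (Hr : 0 < dot r r).
  { pose proof (nrm_sub_rev r z). rewrite (nrm_unit z Zs) in H.
    apply Rabs_le_between in H. assert (0 < nrm r) by lra.
    rewrite <- nrm_sq. nra. }
  assert (Hnr : sph_hull A (normz r)).
  { apply HZ. apply normz_unit; auto. rewrite pdist_nrm.
    rewrite nrm_vsub_sym. rewrite <- (normz_of_unit z Zs) at 1.
    eapply Rle_lt_trans. apply normz_lip; auto. rewrite Zs; lra.
    rewrite (nrm_unit z Zs). lra. }
  destruct Hnr as [_ Hnr].
  assert (Cr : in_cone A r).
  { apply cone_unscale with (/ nrm r). apply Rinv_0_lt_compat, nrm_pos; auto. exact Hnr. }
  assert (Cv : in_cone A v).
  { apply cone_unscale with (/ l). apply Rinv_0_lt_compat; auto. exact Cr. }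
  assert (Cq : in_cone A (pscale L q)).
  { replace (pscale L q) with (padd v (pscale m w')). apply cone_add; auto. apply cone_scale; auto.
    unfold v; vext. }
  apply cone_unscale with L; auto.
Qed.

Definition lipconn (D : list arc) (A : list pt) (x y : pt) : Prop :=
  exists (g : R -> pt) (L : R), 0 <= L /\
   (forall s t, 0 <= s <= 1 -> 0 <= t <= 1 -> dist (g s) (g t) <= L * Rabs (s - t)) /\
   g 0 = x /\ g 1 = y /\
   (forall t, 0 <= t <= 1 -> exists a, In a D /\ on_arc a (g t)) /\
   (forall t, 0 < t < 1 -> sph_interior (sph_hull A) (g t)).

Lemma lip_int_conn : forall D A x y, lipconn D A x y -> int_connected D (sph_hull A) x y.
Proof. intros D A x y [g [L [HL [Hlip [H0 [H1 [Ha Hi]]]]]]].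
  exists g. split; [|split; [auto|split; [auto|split; auto]]]. intros t Ht eps Heps.
  exists (eps / (L + 1)). split. apply Rlt_gt, Rdiv_lt_0_compat; lra.
  intros s Hs Hst. eapply Rle_lt_trans. apply Hlip; auto.
  apply Rle_lt_trans with ((L + 1) * Rabs (s - t)). pose proof (Rabs_pos (s - t)). nra.
  apply Rmult_lt_reg_l with (/ (L + 1)). apply Rinv_0_lt_compat; lra.
  rewrite <- Rmult_assoc, Rinv_l by lra. rewrite Rmult_1_l. unfold Rdiv in Hst. lra. Qed.

Lemma lip_trans : forall D A x y z, lipconn D A x y -> lipconn D A y z ->
  sph_interior (sph_hull A) y -> lipconn D A x z.
Proof. intros D A x y z [g1 [L1 [HL1 [Hl1 [G10 [G11 [Ha1 Hi1]]]]]]] [g2 [L2 [HL2 [Hl2 [G20 [G21 [Ha2 Hi2]]]]]]] Hy.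
  set (g := fun t => if Rle_dec t (1/2) then g1 (2 * t) else g2 (2 * t - 1)).
  exists g, (2 * (L1 + L2)). split. lra. split.
  - assert (Key: forall s t, 0 <= s <= 1/2 -> 1/2 < t <= 1 ->
       dist (g1 (2 * s)) (g2 (2 * t - 1)) <= 2 * (L1 + L2) * Rabs (s - t)).
    { intros s t Hs Ht. eapply Rle_trans. apply (pdist_tri _ (g1 1)).
      rewrite G11, <- G20.
      pose proof (Hl1 (2 * s) 1 ltac:(lra) ltac:(lra)). pose proof (Hl2 0 (2 * t - 1) ltac:(lra) ltac:(lra)).
      rewrite G11, <- G20 in H.
      rewrite Rabs_left1 in H by lra. rewrite Rabs_left1 in H0 by lra. rewrite Rabs_left1 by lra.
      assert (L1 * (- (2 * s - 1)) <= L1 * (2 * (t - s))) by (apply Rmult_le_compat_l; lra).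
      assert (L2 * (- (0 - (2 * t - 1))) <= L2 * (2 * (t - s))) by (apply Rmult_le_compat_l; lra).
      replace (2 * (L1 + L2) * - (s - t)) with (L1 * (2 * (t - s)) + L2 * (2 * (t - s))) by ring.
      lra. }
    intros s t Hs Ht. unfold g. destruct (Rle_dec s (1/2)), (Rle_dec t (1/2)).
    + eapply Rle_trans. apply Hl1; lra. replace (2 * s - 2 * t) with (2 * (s - t)) by ring.
      rewrite Rabs_mult, Rabs_right by lra. pose proof (Rabs_pos (s - t)). nra.
    + apply Key; lra.
    + rewrite pdist_sym, Rabs_minus_sym. apply Key; lra.
    + eapply Rle_trans. apply Hl2; lra. replace (2 * s - 1 - (2 * t - 1)) with (2 * (s - t)) by ring.
      rewrite Rabs_mult, Rabs_right by lra. pose proof (Rabs_pos (s - t)). nra.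
  - unfold g. split; [|split; [|split]].
    + destruct (Rle_dec 0 (1/2)); [|lra]. rewrite Rmult_0_r; auto.
    + destruct (Rle_dec 1 (1/2)); [lra|]. replace (2 * 1 - 1) with 1 by ring; auto.
    + intros t0 Ht. destruct (Rle_dec t0 (1/2)); [apply Ha1 | apply Ha2]; lra.
    + intros t0 Ht. destruct (Rle_dec t0 (1/2)).
      * destruct (Req_dec t0 (1/2)) as [E|E]. rewrite E. replace (2 * (1/2)) with 1 by field. rewrite G11; auto.
        apply Hi1; lra.
      * apply Hi2; lra. Qed.

Definition comb (a : R) (p : pt) (b : R) (q : pt) : pt := padd (pscale a p) (pscale b q).

Lemma comb_norm_lb : forall p q t, on_sphere p -> on_sphere q -> 0 <= t <= 1 ->
  (1 + dot p q) / 2 <= dot (comb (1 - t) p t q) (comb (1 - t) p t q).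
Proof. intros p q t Hp Hq Ht. unfold comb. repeat (rewrite ?dot_addr, ?dot_scaler, ?dot_addl, ?dot_scalel).
  unfold on_sphere in *. rewrite Hp, Hq, (dot_sym q p). pose proof (CS p q). rewrite Hp, Hq in H.
  assert (dot p q <= 1) by (apply sq_le; lra).
  assert (0 <= (1 - dot p q) * ((1 - 2 * t) * (1 - 2 * t))) by (apply Rmult_le_pos; [lra | pose proof (Rle_0_sqr (1 - 2 * t)); unfold Rsqr in *; lra]).
  unfold Rdiv. lra. Qed.

Lemma seg_lip : forall p q T, on_sphere p -> on_sphere q -> -1 < dot p q -> 0 <= T <= 1 ->
  exists L, 0 <= L /\ forall s t, 0 <= s <= 1 -> 0 <= t <= 1 ->
   dist (normz (comb (1 - T * s) p (T * s) q)) (normz (comb (1 - T * t) p (T * t) q)) <= L * Rabs (s - t).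
Proof. intros p q T Hp Hq Hk HT.
  set (mu := sqrt ((1 + dot p q) / 2)).
  assert (Hmu : 0 < mu) by (apply sqrt_lt_R0; lra).
  exists (2 * 2 / mu). split. left; apply Rdiv_lt_0_compat; lra.
  intros s t Hs Ht.
  assert (Lb : forall t, 0 <= t <= 1 -> mu <= nrm (comb (1 - T * t) p (T * t) q)).
  { intros t0 Ht0. unfold mu, nrm. apply sqrt_le_1_alt. apply comb_norm_lb; auto; nra. }
  assert (Pos : forall t, 0 <= t <= 1 -> 0 < dot (comb (1 - T * t) p (T * t) q) (comb (1 - T * t) p (T * t) q)).
  { intros t0 Ht0. pose proof (Lb t0 Ht0). rewrite <- nrm_sq. nra. }
  rewrite pdist_nrm. eapply Rle_trans. apply normz_lip; auto.
  assert (E : vsub (comb (1 - T * s) p (T * s) q) (comb (1 - T * t) p (T * t) q) = pscale (T * (t - s)) (vsub p q)).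
  { unfold comb; vext. }
  rewrite E, nrm_scale.
  assert (nrm (vsub p q) <= 2).
  { replace (vsub p q) with (padd p (popp q)) by vext. eapply Rle_trans. apply nrm_add.
    unfold popp. rewrite !nrm_scale. rewrite !nrm_unit by auto.
    assert (E1: Rabs (-1) = 1) by (rewrite Rabs_left; lra). rewrite E1. lra. }
  pose proof (Lb t Ht). pose proof (nrm_ge0 (vsub p q)).
  rewrite Rabs_mult. rewrite (Rabs_right T) by lra. rewrite Rabs_minus_sym.
  pose proof (Rabs_pos (s - t)).
  unfold Rdiv. apply Rle_trans with (2 * (T * Rabs (s - t) * nrm (vsub p q)) * / mu).
  { apply Rmult_le_compat_l. repeat apply Rmult_le_pos; lra. apply Rinv_le_contravar; lra. }
  apply Rle_trans with (2 * (1 * Rabs (s - t) * 2) * / mu).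
  { apply Rmult_le_compat_r. left; apply Rinv_0_lt_compat; lra. apply Rmult_le_compat_l. lra.
    apply Rmult_le_compat; try lra. apply Rmult_le_pos; lra. apply Rmult_le_compat_r; lra. }
  lra. Qed.

Lemma on_arc_comb : forall a p q al be, on_arc a p -> on_arc a q -> 0 <= al -> 0 <= be ->
  0 < dot (comb al p be q) (comb al p be q) -> on_arc a (normz (comb al p be q)).
Proof. intros a p q al be [Hp [s1 [t1 [Hs1 [Ht1 Ep]]]]] [Hq [s2 [t2 [Hs2 [Ht2 Eq]]]]] Hal Hbe Hpos.
  split. apply normz_unit; auto. pose proof (nrm_pos _ Hpos) as HN.
  exists (/ nrm (comb al p be q) * (al * s1 + be * s2)), (/ nrm (comb al p be q) * (al * t1 + be * t2)).
  split. apply Rmult_le_pos. left; apply Rinv_0_lt_compat; auto. nra.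
  split. apply Rmult_le_pos. left; apply Rinv_0_lt_compat; auto. nra.
  unfold normz. set (N := nrm (comb al p be q)). clearbody N. unfold comb. rewrite Ep, Eq. vring. Qed.

Lemma comb_0 : forall p q, comb 1 p 0 q = p.
Proof. intros; unfold comb; vext. Qed.
Lemma comb_1 : forall p q, comb 0 p 1 q = q.
Proof. intros; unfold comb; vext. Qed.

Lemma seg_conn : forall D A a p q T, In a D -> on_arc a p -> on_arc a q -> -1 < dot p q -> 0 < T <= 1 ->
  (forall tau, 0 < tau < T -> sph_interior (sph_hull A) (normz (comb (1 - tau) p tau q))) ->
  lipconn D A p (normz (comb (1 - T) p T q)).
Proof. intros D A a p q T Ha Hp Hq Hk HT Hint.
  assert (Sp : on_sphere p) by (destruct Hp; auto). assert (Sq : on_sphere q) by (destruct Hq; auto).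
  destruct (seg_lip p q T Sp Sq Hk ltac:(lra)) as [L [HL Hl]].
  exists (fun t => normz (comb (1 - T * t) p (T * t) q)), L. split; [auto|split; [auto|split; [|split; [|split]]]].
  - simpl. rewrite Rmult_0_r, Rminus_0_r, comb_0. apply normz_of_unit; auto.
  - simpl. rewrite Rmult_1_r. auto.
  - intros t0 Ht. exists a. split; auto. apply on_arc_comb; auto; try nra.
    pose proof (comb_norm_lb p q (T * t0) Sp Sq ltac:(nra)). lra.
  - intros t0 Ht. apply Hint. nra. Qed.

Lemma span_identity : forall u v w : pt, let N := cross u v in
  pscale (dot N N) w = padd (padd (pscale (dot w u * dot v v - dot w v * dot u v) u)
        (pscale (dot w v * dot u u - dot w u * dot u v) v)) (pscale (dot w N) N).
Proof. intros [] [] []. simpl. unfold dot, cross, pscale, padd. simpl. f_equal; ring. Qed.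

Lemma det_identity : forall p q r N : pt,
  pscale (dot (cross p q) r) N = padd (padd (pscale (dot p N) (cross q r)) (pscale (dot q N) (cross r p))) (pscale (dot r N) (cross p q)).
Proof. intros [] [] [] []. simpl. unfold dot, cross, pscale, padd. simpl. f_equal; ring. Qed.

Lemma lagrange : forall u v, dot (cross u v) (cross u v) = dot u u * dot v v - dot u v * dot u v.
Proof. intros [] []; vunf; ring. Qed.

Lemma unit_dot1 : forall u v, on_sphere u -> on_sphere v -> dot u v = 1 -> u = v.
Proof. intros u v Hu Hv H. apply pdist_eq0. rewrite pdist_nrm. unfold nrm.
  replace (dot (vsub u v) (vsub u v)) with (dot u u - 2 * dot u v + dot v v).
  unfold on_sphere in *. rewrite Hu, Hv, H. replace (1 - 2 * 1 + 1) with 0 by ring. apply sqrt_0.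
  rewrite !dot_subl, !dot_subr, (dot_sym v u). ring. Qed.

Lemma unit_dotm1 : forall u v, on_sphere u -> on_sphere v -> dot u v = -1 -> u = popp v.
Proof. intros u v Hu Hv H. apply unit_dot1; auto. unfold on_sphere, popp in *. rewrite !dot_scalel, !dot_scaler, Hv. ring.
  unfold popp. rewrite dot_scaler, H. ring. Qed.

Lemma unit_dot_bound : forall u v, on_sphere u -> on_sphere v -> -1 <= dot u v <= 1.
Proof. intros u v Hu Hv. pose proof (CS u v). unfold on_sphere in *. rewrite Hu, Hv in H. split; nra. Qed.

Lemma unit_dot_lt : forall u v, on_sphere u -> on_sphere v -> u <> popp v -> -1 < dot u v.
Proof. intros. destruct (unit_dot_bound u v H H0). destruct H2; auto. exfalso. apply H1, unit_dotm1; auto. Qed.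

Lemma arcN : forall a, arc_wf a -> 0 < dot (cross (asrc a) (adst a)) (cross (asrc a) (adst a)).
Proof. intros a [Hu [Hv [Hne Hna]]]. rewrite lagrange. unfold on_sphere in *. rewrite Hu, Hv.
  destruct (unit_dot_bound _ _ Hu Hv).
  assert (dot (asrc a) (adst a) <> 1) by (intro; apply Hne, unit_dot1; auto).
  assert (dot (asrc a) (adst a) <> -1) by (intro; apply Hna, unit_dotm1; auto).
  assert (-1 < dot (asrc a) (adst a) < 1) by lra. nra. Qed.

Lemma indep : forall a al be, arc_wf a ->
  padd (pscale al (asrc a)) (pscale be (adst a)) = pzero -> al = 0 /\ be = 0.
Proof. intros a al be Hw H. pose proof (arcN a Hw). set (u := asrc a) in *. set (v := adst a) in *.
  assert (E1 : dot (cross (padd (pscale al u) (pscale be v)) v) (cross u v) = al * dot (cross u v) (cross u v)).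
  { clearbody u v. destruct u, v; vunf; ring. }
  assert (E2 : dot (cross u (padd (pscale al u) (pscale be v))) (cross u v) = be * dot (cross u v) (cross u v)).
  { clearbody u v. destruct u, v; vunf; ring. }
  rewrite H in E1, E2. assert (Z1: dot (cross pzero v) (cross u v) = 0) by (clearbody u v; destruct u, v; vunf; ring).
  assert (Z2: dot (cross u pzero) (cross u v) = 0) by (clearbody u v; destruct u, v; vunf; ring).
  rewrite Z1 in E1; rewrite Z2 in E2. split; nra. Qed.

Lemma span_arc : forall a w, arc_wf a -> dot (cross (asrc a) (adst a)) w = 0 ->
  exists al be, w = padd (pscale al (asrc a)) (pscale be (adst a)).
Proof. intros a w Hw H. pose proof (arcN a Hw). pose proof (span_identity (asrc a) (adst a) w) as E.
  simpl in E. rewrite (dot_sym w (cross (asrc a) (adst a))), H in E.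
  set (N2 := dot (cross (asrc a) (adst a)) (cross (asrc a) (adst a))) in *.
  exists ((dot w (asrc a) * dot (adst a) (adst a) - dot w (adst a) * dot (asrc a) (adst a)) / N2).
  exists ((dot w (adst a) * dot (asrc a) (asrc a) - dot w (asrc a) * dot (asrc a) (adst a)) / N2).
  apply (f_equal (pscale (/ N2))) in E.
  replace (pscale (/ N2) (pscale N2 w)) with w in E by (apply pt_ext; vunf; field; lra).
  rewrite E at 1. clearbody N2. apply pt_ext; vunf; field; lra. Qed.

Lemma on_arc_endpoint_src : forall a, arc_wf a -> on_arc a (asrc a).
Proof. intros a Hw. split. apply Hw. exists 1, 0. split; [lra|split; [lra|]]. vext. Qed.
Lemma on_arc_endpoint_dst : forall a, arc_wf a -> on_arc a (adst a).
Proof. intros a Hw. split. apply Hw. exists 0, 1. split; [lra|split; [lra|]]. vext. Qed.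

Lemma endpoint_not_relint : forall a e, arc_wf a -> is_endpoint a e -> ~ in_relint a e.
Proof. intros a e Hw [He|He] [_ [s [t [Hs [Ht E]]]]]; subst e.
  - assert (padd (pscale (s - 1) (asrc a)) (pscale t (adst a)) = pzero).
    { transitivity (vsub (padd (pscale s (asrc a)) (pscale t (adst a))) (asrc a)). vring. rewrite <- E. vring. }
    apply indep in H; auto. lra.
  - assert (padd (pscale s (asrc a)) (pscale (t - 1) (adst a)) = pzero).
    { transitivity (vsub (padd (pscale s (asrc a)) (pscale t (adst a))) (adst a)). vring. rewrite <- E. vring. }
    apply indep in H; auto. lra. Qed.

Lemma unit_scale_eq : forall t v, 0 <= t -> on_sphere v -> on_sphere (pscale t v) -> t = 1.
Proof. intros. unfold on_sphere in *. rewrite dot_scalel, dot_scaler, H0 in H1. nra. Qed.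

Lemma on_arc_cases : forall a p, arc_wf a -> on_arc a p ->
  in_relint a p \/ p = asrc a \/ p = adst a.
Proof. intros a p Hw [Hp [s [t [Hs [Ht E]]]]].
  destruct (Rle_lt_or_eq_dec 0 s Hs) as [Hs'|Hs']; destruct (Rle_lt_or_eq_dec 0 t Ht) as [Ht'|Ht'].
  - left. split; auto. exists s, t; auto.
  - right; left. subst t. assert (p = pscale s (asrc a)) by (rewrite E; vext).
    rewrite H in Hp. pose proof (unit_scale_eq s (asrc a) Hs ltac:(apply Hw) Hp). rewrite H, H0; vext.
  - right; right. subst s. assert (p = pscale t (adst a)) by (rewrite E; vext).
    rewrite H in Hp. pose proof (unit_scale_eq t (adst a) Ht ltac:(apply Hw) Hp). rewrite H, H0; vext.
  - exfalso. subst s t. assert (p = pzero) by (rewrite E; vext). rewrite H in Hp. unfold on_sphere in Hp; vunf. lra. Qed.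

Lemma to_relint : forall D a p, SD D -> In a D -> on_arc a p -> exists b, In b D /\ in_relint b p.
Proof. intros D a p [_ [Hwf [_ Hbl]]] Ha Hp. destruct (on_arc_cases a p (Hwf a Ha) Hp) as [H|[H|H]].
  - exists a; auto.
  - apply (Hbl a p Ha). left; auto.
  - apply (Hbl a p Ha). right; auto. Qed.

Lemma relint_on_arc : forall a p, in_relint a p -> on_arc a p.
Proof. intros a p [Hp [s [t [Hs [Ht E]]]]]. split; auto. exists s, t. repeat split; auto; lra. Qed.

Lemma relint_normz : forall a s t, arc_wf a -> 0 < s -> 0 < t ->
  in_relint a (normz (padd (pscale s (asrc a)) (pscale t (adst a)))).
Proof. intros a s t Hw Hs Ht. set (p := padd (pscale s (asrc a)) (pscale t (adst a))).
  assert (Hp : 0 < dot p p).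
  { destruct (Rle_lt_or_eq_dec 0 (dot p p) (dot_ge0 p)); auto. symmetry in e. apply dot_eq0 in e.
    apply indep in e; auto. lra. }
  pose proof (nrm_pos p Hp). split. apply normz_unit; auto.
  exists (/ nrm p * s), (/ nrm p * t). split. apply Rmult_lt_0_compat; auto; apply Rinv_0_lt_compat; auto.
  split. apply Rmult_lt_0_compat; auto; apply Rinv_0_lt_compat; auto.
  unfold normz, p. set (N := nrm _). clearbody N. vring. Qed.

Lemma overlap : forall D a b e o, SD D -> In a D -> In b D ->
  ((e = asrc a /\ o = adst a) \/ (e = adst a /\ o = asrc a)) ->
  in_relint b e -> dot (cross (asrc b) (adst b)) o = 0 -> False.
Proof. intros D a b e o HSD Ha Hb Heo Hrb Ho.
  destruct HSD as [Hne [Hwf [Hdis Hbl]]].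
  assert (Hab : a <> b).
  { intro; subst b. apply (endpoint_not_relint a e (Hwf a Ha)); auto.
    destruct Heo as [[-> _]|[-> _]]; [left|right]; auto. }
  destruct (span_arc b o (Hwf b Hb) Ho) as [al [be Eo]].
  destruct Hrb as [He [s1 [t1 [Hs1 [Ht1 Ee]]]]].
  set (d := Rmin s1 t1 / (2 * (Rabs al + Rabs be + 1))).
  assert (Hd : 0 < d). { unfold d. apply Rdiv_lt_0_compat. apply Rmin_glb_lt; auto.
    pose proof (Rabs_pos al); pose proof (Rabs_pos be); lra. }
  assert (Hd1 : d * Rabs al < s1 /\ d * Rabs be < t1).
  { pose proof (Rmin_l s1 t1); pose proof (Rmin_r s1 t1).
    pose proof (Rabs_pos al); pose proof (Rabs_pos be).
    assert (d * (2 * (Rabs al + Rabs be + 1)) = Rmin s1 t1) by (unfold d; field; lra).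
    assert (0 < Rmin s1 t1) by (apply Rmin_glb_lt; auto). split; nra. }
  assert (C1 : 0 < s1 + d * al). { pose proof (Rle_abs (- al)). rewrite Rabs_Ropp in H. nra. }
  assert (C2 : 0 < t1 + d * be). { pose proof (Rle_abs (- be)). rewrite Rabs_Ropp in H. nra. }
  set (p := padd (pscale (s1 + d * al) (asrc b)) (pscale (t1 + d * be) (adst b))).
  assert (Rb : in_relint b (normz p)) by (apply relint_normz; auto).
  assert (Ra : in_relint a (normz p)).
  { destruct Heo as [[-> ->]|[-> ->]].
    - replace p with (padd (pscale 1 (asrc a)) (pscale d (adst a))). apply relint_normz; auto; lra.
      unfold p. rewrite Ee, Eo. vring.
    - replace p with (padd (pscale d (asrc a)) (pscale 1 (adst a))). apply relint_normz; auto; lra.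
      unfold p. rewrite Ee, Eo. vring. }
  exact (Hdis a b (normz p) Ha Hb Hab Ra Rb). Qed.

Definition lv (n c z : pt) : R := dot n z / dot c z.
Definition klt (n m c : pt) (z1 z2 : pt) : Prop :=
  lv n c z1 < lv n c z2 \/ (lv n c z1 = lv n c z2 /\ lv m c z1 < lv m c z2).

Lemma klt_trans : forall n m c x y z, klt n m c x y -> klt n m c y z -> klt n m c x z.
Proof. unfold klt; intros; lra. Qed.
Lemma klt_asym : forall n m c x y, klt n m c x y -> ~ klt n m c y x.
Proof. unfold klt; intros; lra. Qed.

Definition Bf (n c e o : pt) : R := dot n e * dot c o - dot n o * dot c e.
Definition good (n m c e o : pt) : Prop := Bf n c e o > 0 \/ (Bf n c e o = 0 /\ Bf m c e o > 0).

Lemma lv_diff : forall n c e o s1 t1 s2 t2,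
  let z1 := padd (pscale s1 e) (pscale t1 o) in let z2 := padd (pscale s2 e) (pscale t2 o) in
  0 < dot c z1 -> 0 < dot c z2 ->
  lv n c z2 - lv n c z1 = (s2 * t1 - t2 * s1) * Bf n c e o / (dot c z1 * dot c z2).
Proof. intros. unfold lv. field_simplify_eq; try lra.
  unfold z1, z2, Bf. repeat (rewrite ?dot_addr, ?dot_scaler). ring. Qed.

Lemma move_strict : forall n m c e o s1 t1 s2 t2,
  good n m c e o ->
  0 < dot c (padd (pscale s1 e) (pscale t1 o)) -> 0 < dot c (padd (pscale s2 e) (pscale t2 o)) ->
  s2 * t1 - t2 * s1 > 0 ->
  klt n m c (padd (pscale s1 e) (pscale t1 o)) (padd (pscale s2 e) (pscale t2 o)).
Proof. intros n m c e o s1 t1 s2 t2 Hg H1 H2 Hd.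
  pose proof (lv_diff n c e o s1 t1 s2 t2 H1 H2) as Dn. pose proof (lv_diff m c e o s1 t1 s2 t2 H1 H2) as Dm.
  simpl in Dn, Dm. unfold klt.
  assert (P : 0 < dot c (padd (pscale s1 e) (pscale t1 o)) * dot c (padd (pscale s2 e) (pscale t2 o))) by nra.
  destruct Hg as [Hg|[Hg0 Hg]].
  - left. assert (0 < (s2 * t1 - t2 * s1) * Bf n c e o / (dot c (padd (pscale s1 e) (pscale t1 o)) * dot c (padd (pscale s2 e) (pscale t2 o)))).
    { apply Rdiv_lt_0_compat; auto. nra. } lra.
  - right. rewrite Hg0 in Dn. split. unfold Rdiv in Dn. rewrite Rmult_0_r, Rmult_0_l in Dn. lra.
    assert (0 < (s2 * t1 - t2 * s1) * Bf m c e o / (dot c (padd (pscale s1 e) (pscale t1 o)) * dot c (padd (pscale s2 e) (pscale t2 o)))).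
    { apply Rdiv_lt_0_compat; auto. nra. } lra. Qed.

Lemma move_weak : forall n m c e o s1 t1 s2 t2,
  good n m c e o ->
  0 < dot c (padd (pscale s1 e) (pscale t1 o)) -> 0 < dot c (padd (pscale s2 e) (pscale t2 o)) ->
  s2 * t1 - t2 * s1 >= 0 ->
  ~ klt n m c (padd (pscale s2 e) (pscale t2 o)) (padd (pscale s1 e) (pscale t1 o)).
Proof. intros n m c e o s1 t1 s2 t2 Hg H1 H2 Hd.
  destruct Hd as [Hd|Hd]. apply klt_asym. apply move_strict; auto.
  pose proof (lv_diff n c e o s1 t1 s2 t2 H1 H2) as Dn. pose proof (lv_diff m c e o s1 t1 s2 t2 H1 H2) as Dm.
  simpl in Dn, Dm. rewrite Hd in Dn, Dm. unfold Rdiv in Dn, Dm. rewrite !Rmult_0_l in Dn, Dm.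
  unfold klt. lra. Qed.

Lemma orient : forall n m c u v, Bf m c u v <> 0 -> good n m c u v \/ good n m c v u.
Proof. intros. unfold good. assert (Bf n c v u = - Bf n c u v) by (unfold Bf; ring).
  assert (Bf m c v u = - Bf m c u v) by (unfold Bf; ring).
  destruct (Rtotal_order (Bf n c u v) 0) as [Hl|[He|Hr]]; [right; left; lra| |left; left; lra].
  destruct (Rtotal_order (Bf m c u v) 0) as [Hl|[He'|Hr]]; [right; right; lra|contradiction|left; right; lra]. Qed.

Definition bP (P : arc -> Prop) (a : arc) : bool := if excluded_middle_informative (P a) then true else false.

Lemma filter_le : forall (l : list arc) (f g : arc -> bool),
  (forall a, In a l -> f a = true -> g a = true) -> (length (filter f l) <= length (filter g l))%nat.
Proof. induction l; simpl; intros f g H; auto.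
  assert (IH := IHl f g (fun b Hb => H b (or_intror Hb))).
  destruct (f a) eqn:Ef; destruct (g a) eqn:Eg; simpl; try lia.
  all: rewrite (H a (or_introl eq_refl) Ef) in Eg; discriminate. Qed.

Lemma filter_lt : forall (l : list arc) (f g : arc -> bool),
  (forall a, In a l -> f a = true -> g a = true) ->
  (exists a, In a l /\ g a = true /\ f a = false) -> (length (filter f l) < length (filter g l))%nat.
Proof. induction l; simpl; intros f g H [b [Hb [Hg Hf]]]; [contradiction|].
  destruct Hb as [<-|Hb].
  - rewrite Hg, Hf. simpl. pose proof (filter_le l f g (fun b Hb => H b (or_intror Hb))). lia.
  - assert (IH := IHl f g (fun b Hb => H b (or_intror Hb)) (ex_intro _ b (conj Hb (conj Hg Hf)))).
    destruct (f a) eqn:Ef; destruct (g a) eqn:Eg; simpl; try lia.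
    all: rewrite (H a (or_introl eq_refl) Ef) in Eg; discriminate. Qed.

Lemma count_lt : forall (l : list arc) (P Q : arc -> Prop),
  (forall a, In a l -> P a -> Q a) -> (exists a, In a l /\ Q a /\ ~ P a) ->
  (length (filter (bP P) l) < length (filter (bP Q) l))%nat.
Proof. intros l P Q H [b [Hb [HQ HP]]]. apply filter_lt.
  - intros a Ha. unfold bP. destruct (excluded_middle_informative (P a)); [|discriminate].
    destruct (excluded_middle_informative (Q a)); auto.
  - exists b. unfold bP. split; auto. destruct (excluded_middle_informative (Q b)); [|contradiction].
    destruct (excluded_middle_informative (P b)); [contradiction|]. auto. Qed.

Lemma comb_pos : forall p q t, on_sphere p -> on_sphere q -> -1 < dot p q -> 0 <= t <= 1 ->
  0 < dot (comb (1 - t) p t q) (comb (1 - t) p t q).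
Proof. intros. pose proof (comb_norm_lb p q t H H0 H2). lra. Qed.

Lemma not_int_nonH : forall (S : pt -> Prop) y, on_sphere y -> ~ sph_interior S y ->
  forall eps, eps > 0 -> exists q, on_sphere q /\ dist y q < eps /\ ~ S q.
Proof. intros S y Hy Hn eps He. apply NNPP. intro C. apply Hn. split; auto. exists eps. split; auto.
  intros q Hq Hd. apply NNPP. intro Hs. apply C. exists q; auto. Qed.

Lemma exit : forall A q e, on_sphere q -> on_sphere e -> -1 < dot q e ->
  sph_interior (sph_hull A) q -> ~ sph_interior (sph_hull A) e ->
  exists T, 0 < T <= 1 /\ sph_boundary (sph_hull A) (normz (comb (1 - T) q T e)) /\
   (forall tau, 0 < tau < T -> sph_interior (sph_hull A) (normz (comb (1 - tau) q tau e))).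
Proof.
  intros A q e Hq He Hk Hiq Hne.
  set (f := fun t => normz (comb (1 - t) q t e)).
  destruct (seg_lip q e 1 Hq He Hk ltac:(lra)) as [L [HL Hl]].
  assert (Hlf : forall s t, 0 <= s <= 1 -> 0 <= t <= 1 -> dist (f s) (f t) <= L * Rabs (s - t)).
  { intros s t Hs Ht. unfold f. pose proof (Hl s t Hs Ht). rewrite !Rmult_1_l in H. exact H. }
  assert (F0 : f 0 = q). { unfold f. rewrite Rminus_0_r, comb_0. apply normz_of_unit; auto. }
  assert (F1 : f 1 = e). { unfold f. rewrite Rminus_diag, comb_1. apply normz_of_unit; auto. }
  assert (Fs : forall t, 0 <= t <= 1 -> on_sphere (f t)). { intros. apply normz_unit, comb_pos; auto. }
  set (S := fun t => 0 <= t <= 1 /\ forall t', 0 <= t' <= t -> sph_interior (sph_hull A) (f t')).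
  assert (S0 : S 0). { split. lra. intros t' Ht'. replace t' with 0 by lra. rewrite F0; auto. }
  assert (Sb : bound S). { exists 1. intros t [Ht _]. lra. }
  destruct (completeness S Sb (ex_intro _ 0 S0)) as [T [HTu HTl]].
  assert (T1 : T <= 1). { apply HTl. intros t [Ht _]. lra. }
  assert (Near : forall t0, 0 <= t0 <= 1 -> sph_interior (sph_hull A) (f t0) ->
     exists d, d > 0 /\ forall t, 0 <= t <= 1 -> Rabs (t - t0) <= d -> sph_interior (sph_hull A) (f t)).
  { intros t0 Ht0 Hi. destruct (int_open _ _ Hi) as [r [Hr Hrr]].
    exists (r / (2 * (L + 1))). split. apply Rlt_gt, Rdiv_lt_0_compat; lra.
    intros t Ht Hd. apply Hrr. apply Fs; auto. rewrite pdist_sym. eapply Rle_lt_trans. apply Hlf; auto.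
    apply Rle_lt_trans with ((L + 1) * (r / (2 * (L + 1)))).
    apply Rmult_le_compat; try lra. apply Rabs_pos.
    replace ((L + 1) * (r / (2 * (L + 1)))) with (r / 2) by (field; lra). lra. }
  assert (Tpos : 0 < T).
  { destruct (Near 0 ltac:(lra) ltac:(rewrite F0; auto)) as [d [Hd Hdd]].
    pose proof (Rmin_r d 1); pose proof (Rmin_l d 1).
    assert (0 < Rmin d 1) by (apply Rmin_glb_lt; lra). set (d' := Rmin d 1) in *.
    assert (Sd : S d'). { split. lra. intros t' Ht'. apply Hdd. lra.
      rewrite Rminus_0_r, Rabs_right by lra. lra. }
    pose proof (HTu d' Sd). lra. }
  assert (Below : forall t, 0 <= t < T -> sph_interior (sph_hull A) (f t)).
  { intros t Ht. apply NNPP. intro C. assert (is_upper_bound S t).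
    { intros t' [Ht' Hs]. destruct (Rle_lt_dec t' t); auto. exfalso. apply C, Hs. lra. }
    pose proof (HTl t H). lra. }
  assert (NotT : ~ sph_interior (sph_hull A) (f T)).
  { intro Hi. destruct (Rle_lt_or_eq_dec T 1 T1) as [Tl|Te].
    - destruct (Near T ltac:(lra) Hi) as [d [Hd Hdd]].
      pose proof (Rmin_r (T + d) 1); pose proof (Rmin_l (T + d) 1).
      assert (T < Rmin (T + d) 1). { apply Rmin_glb_lt; lra. }
      set (t1 := Rmin (T + d) 1) in *.
      assert (St : S t1). { split. split; lra. intros t' Ht'.
        destruct (Rlt_le_dec t' T). apply Below; lra. apply Hdd. lra.
        rewrite Rabs_right by lra. lra. }
      pose proof (HTu t1 St). lra.
    - apply Hne. rewrite <- F1, <- Te. auto. }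
  exists T. split. lra. split.
  - split. apply Fs; lra. intros eps Heps. split.
    + pose proof (Rmin_r (eps / (2 * (L + 1))) (T / 2)); pose proof (Rmin_l (eps / (2 * (L + 1))) (T / 2)).
      assert (Hd : 0 < Rmin (eps / (2 * (L + 1))) (T / 2)). { apply Rmin_glb_lt. apply Rdiv_lt_0_compat; lra. lra. }
      set (d := Rmin (eps / (2 * (L + 1))) (T / 2)) in *.
      exists (f (T - d)). split. apply Fs. lra.
      split. eapply Rle_lt_trans. apply Hlf; try lra.
      replace (T - (T - d)) with d by ring. rewrite Rabs_right by lra.
      apply Rle_lt_trans with ((L + 1) * (eps / (2 * (L + 1)))).
      apply Rmult_le_compat; try lra.
      replace ((L + 1) * (eps / (2 * (L + 1)))) with (eps / 2) by (field; lra). lra.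
      apply int_sub. apply Below. lra.
    + apply not_int_nonH; auto. apply Fs; lra.
  - intros tau Htau. apply Below. lra.
Qed.

Definition EO (b : arc) (e o : pt) : Prop := (e = asrc b /\ o = adst b) \/ (e = adst b /\ o = asrc b).

Lemma eo_coords : forall b e o z, EO b e o -> on_arc b z ->
  exists s t, 0 <= s /\ 0 <= t /\ z = padd (pscale s e) (pscale t o).
Proof. intros b e o z [[-> ->]|[-> ->]] [_ [s [t [Hs [Ht E]]]]].
  - exists s, t; auto.
  - exists t, s. repeat split; auto. rewrite E; vring. Qed.

Lemma eo_relint : forall b e o z, EO b e o -> in_relint b z ->
  exists s t, 0 < s /\ 0 < t /\ z = padd (pscale s e) (pscale t o).
Proof. intros b e o z [[-> ->]|[-> ->]] [_ [s [t [Hs [Ht E]]]]].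
  - exists s, t; auto.
  - exists t, s. repeat split; auto. rewrite E; vring. Qed.

Lemma eo_indep : forall b e o al be, arc_wf b -> EO b e o ->
  padd (pscale al e) (pscale be o) = pzero -> al = 0 /\ be = 0.
Proof. intros b e o al be Hw [[-> ->]|[-> ->]] H.
  - apply (indep b); auto.
  - assert (padd (pscale be (asrc b)) (pscale al (adst b)) = pzero) by (rewrite <- H; vring).
    apply (indep b) in H0; auto. tauto. Qed.

Lemma eo_e_on : forall b e o, arc_wf b -> EO b e o -> on_arc b e.
Proof. intros b e o Hw [[-> ->]|[-> ->]]. apply on_arc_endpoint_src; auto. apply on_arc_endpoint_dst; auto. Qed.

Lemma eo_endpoint : forall b e o, EO b e o -> is_endpoint b e.
Proof. intros b e o [[-> ->]|[-> ->]]; [left|right]; auto. Qed.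

Lemma move_strict_eq : forall n m c e o s1 t1 s2 t2 z1 z2, good n m c e o ->
  z1 = padd (pscale s1 e) (pscale t1 o) -> z2 = padd (pscale s2 e) (pscale t2 o) ->
  0 < dot c z1 -> 0 < dot c z2 -> s2 * t1 - t2 * s1 > 0 -> klt n m c z1 z2.
Proof. intros; subst; apply move_strict; auto. Qed.

Lemma move_weak_eq : forall n m c e o s1 t1 s2 t2 z1 z2, good n m c e o ->
  z1 = padd (pscale s1 e) (pscale t1 o) -> z2 = padd (pscale s2 e) (pscale t2 o) ->
  0 < dot c z1 -> 0 < dot c z2 -> s2 * t1 - t2 * s1 >= 0 -> ~ klt n m c z2 z1.
Proof. intros; subst; apply move_weak; auto. Qed.

Definition Pq (n m c : pt) (A : list pt) (q : pt) (a : arc) : Prop :=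
  exists z, on_arc a z /\ sph_interior (sph_hull A) z /\ klt n m c q z.

Definition cnt (n m c : pt) (A : list pt) (D : list arc) (q : pt) : nat :=
  length (filter (bP (Pq n m c A q)) D).

Definition WalkGoal (D : list arc) (A : list pt) (n m c q : pt) : Prop :=
  exists b y, In b D /\ thrusts b (sph_hull A) y /\ lipconn D A q y /\ klt n m c q y.

Definition Ctx (D : list arc) (A : list pt) (c : pt) (g : R) (m : pt) : Prop :=
  SD D /\ HypA A c g /\ (forall p, sph_hull A p -> dot c p > 0) /\
  (forall a, In a D -> (exists z, on_arc a z /\ sph_interior (sph_hull A) z) -> Bf m c (asrc a) (adst a) <> 0).

Lemma int_cpos : forall A c, (forall p, sph_hull A p -> dot c p > 0) -> forall z,
  sph_interior (sph_hull A) z -> 0 < dot c z.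
Proof. intros. apply Rgt_lt, H, int_sub; auto. Qed.

Lemma walk_step : forall D A c g m n q b, Ctx D A c g m ->
  (forall q' b', (cnt n m c A D q' < cnt n m c A D q)%nat -> In b' D -> in_relint b' q' ->
      sph_interior (sph_hull A) q' -> WalkGoal D A n m c q') ->
  In b D -> in_relint b q -> sph_interior (sph_hull A) q -> WalkGoal D A n m c q.
Proof.
  intros D A c g m n q b HC IH Hb Hrq Hiq.
  destruct HC as [HSD [HA [Hc Hgen]]].
  pose proof HSD as [_ [Hwf [_ Hbl]]].
  assert (Hw : arc_wf b) by auto.
  assert (HB : Bf m c (asrc b) (adst b) <> 0).
  { apply Hgen; auto. exists q. split; auto. apply relint_on_arc; auto. }
  assert (Heo : exists e o, EO b e o /\ good n m c e o).
  { destruct (orient n m c _ _ HB) as [G|G]; [exists (asrc b), (adst b) | exists (adst b), (asrc b)];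
    split; auto; unfold EO; auto. }
  destruct Heo as [e [o [Heo Hg]]].
  destruct (eo_relint b e o q Heo Hrq) as [s0 [t0 [Hs0 [Ht0 Eq]]]].
  assert (He_on : on_arc b e) by (eapply eo_e_on; eauto).
  assert (Hq_on : on_arc b q) by (apply relint_on_arc; auto).
  assert (Se : on_sphere e) by (destruct He_on; auto).
  assert (Sq : on_sphere q) by (destruct Hq_on; auto).
  assert (Hk : -1 < dot q e).
  { apply unit_dot_lt; auto. intro E. rewrite Eq in E.
    assert (padd (pscale (s0 + 1) e) (pscale t0 o) = pzero).
    { transitivity (padd (padd (pscale s0 e) (pscale t0 o)) e). vring. rewrite E. vring. }
    apply (eo_indep b e o) in H; auto. lra. }
  assert (cq : 0 < dot c q) by (apply int_cpos with A; auto).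
  assert (Ee : e = padd (pscale 1 e) (pscale 0 o)) by vring.
  destruct (classic (sph_interior (sph_hull A) e)) as [Hie|Hnie].
  - (* move to the endpoint e, then continue on a blocking arc *)
    assert (ce : 0 < dot c e) by (apply int_cpos with A; auto).
    assert (Kqe : klt n m c q e).
    { apply (move_strict_eq n m c e o s0 t0 1 0); auto. lra. }
    assert (Lqe : lipconn D A q e).
    { assert (E1 : e = normz (comb (1 - 1) q 1 e)) by (rewrite Rminus_diag, comb_1, normz_of_unit; auto).
      rewrite E1 at 1. apply seg_conn with b; auto. lra.
      intros tau Htau. unfold comb. apply L1c; auto. apply int_cl; auto. lra. lra.
      apply comb_pos; auto; lra. }
    destruct (Hbl b e Hb (eo_endpoint b e o Heo)) as [b2 [Hb2 Hr2]].
    assert (Hlt : (cnt n m c A D e < cnt n m c A D q)%nat).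
    { apply count_lt.
      - intros a Ha [z [Hz1 [Hz2 Hz3]]]. exists z. split; auto. split; auto. eapply klt_trans; eauto.
      - exists b. split; auto. split.
        + exists e. auto.
        + intros [z [Hz1 [Hz2 Hz3]]].
          destruct (eo_coords b e o z Heo Hz1) as [s [t [Hs [Ht Ez]]]].
          assert (cz : 0 < dot c z) by (apply int_cpos with A; auto).
          revert Hz3. apply (move_weak_eq n m c e o s t 1 0); auto. lra. }
    destruct (IH e b2 Hlt Hb2 Hr2 Hie) as [b' [y [Hb' [Ht [Hl Hk2]]]]].
    exists b', y. split; auto. split; auto. split. apply lip_trans with e; auto. eapply klt_trans; eauto.
  -
    destruct (exit A q e Sq Se Hk Hiq Hnie) as [T [HT [Hby Hin]]].
    set (w := comb (1 - T) q T e) in *.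
    assert (Hwp : 0 < dot w w) by (apply comb_pos; auto; lra).
    exists b, (normz w). split; auto. split; [|split].
    + split. apply on_arc_comb; auto; lra. split; auto. exists q; auto.
    + apply seg_conn with b; auto.
    + assert (cy : 0 < dot c (normz w)).
      { pose proof (cl_cpos A c g HA _ (bnd_cl A _ Hby)). destruct HA as [_ [Hg0 _]]. lra. }
      set (Nw := nrm w) in *. assert (HN : 0 < Nw) by (apply nrm_pos; auto).
      assert (Ey : normz w = padd (pscale (/ Nw * ((1 - T) * s0 + T)) e) (pscale (/ Nw * ((1 - T) * t0)) o)).
      { unfold normz. fold Nw. unfold w, comb. rewrite Eq. vring. }
      apply (move_strict_eq n m c e o s0 t0 _ _ q _ Hg Eq Ey); auto.
      replace (/ Nw * ((1 - T) * s0 + T) * t0 - / Nw * ((1 - T) * t0) * s0) with (/ Nw * (T * t0)) by ring.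
      apply Rmult_lt_0_compat. apply Rinv_0_lt_compat; auto. nra.
Qed.

Lemma walk_rel : forall D A c g m n, Ctx D A c g m -> forall N q b,
  (cnt n m c A D q < N)%nat -> In b D -> in_relint b q -> sph_interior (sph_hull A) q -> WalkGoal D A n m c q.
Proof. intros D A c g m n HC N. induction N; intros q b Hlt Hb Hr Hi. lia.
  apply walk_step with g b; auto. intros q' b' Hlt' Hb' Hr' Hi'. apply IHN with b'; auto. lia. Qed.

Lemma walk : forall D A c g m n q, Ctx D A c g m -> sph_interior (sph_hull A) q ->
  (exists a, In a D /\ on_arc a q) -> WalkGoal D A n m c q.
Proof. intros D A c g m n q HC Hi [a [Ha Hq]]. pose proof HC as [HSD _].
  destruct (to_relint D a q HSD Ha Hq) as [b [Hb Hr]].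
  apply walk_rel with g (S (cnt n m c A D q)) b; auto. Qed.

Definition rterm (m W0 W : pt) : R :=
  if Req_dec_T (dot W0 W) 0 then 0 else Rabs (dot m W) / Rabs (dot W0 W).

Lemma rterm_ge0 : forall m W0 W, 0 <= rterm m W0 W.
Proof. intros. unfold rterm. destruct (Req_dec_T (dot W0 W) 0). lra.
  apply Rmult_le_pos. apply Rabs_pos. left; apply Rinv_0_lt_compat. apply Rabs_pos_lt; auto. Qed.

Fixpoint rsum (m W0 : pt) (l : list pt) : R :=
  match l with nil => 0 | W :: l' => rterm m W0 W + rsum m W0 l' end.

Lemma rsum_ge : forall m W0 l W, In W l -> rterm m W0 W <= rsum m W0 l.
Proof. induction l; simpl; intros W H; [contradiction|]. destruct H as [<-|H].
  - assert (0 <= rsum m W0 l). { clear IHl. induction l; simpl. lra. pose proof (rterm_ge0 m W0 a0). lra. }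
    lra.
  - pose proof (IHl W H). pose proof (rterm_ge0 m W0 a). lra. Qed.

Lemma rsum_ge0 : forall m W0 l, 0 <= rsum m W0 l.
Proof. induction l; simpl. lra. pose proof (rterm_ge0 m W0 a). lra. Qed.

Lemma generic_vecs : forall (Ws : list pt), exists m, forall W, In W Ws -> 0 < dot W W -> dot m W <> 0.
Proof. induction Ws as [|W0 Ws IH].
  - exists pzero. intros W H; contradiction.
  - destruct IH as [m Hm].
    destruct (Rlt_le_dec 0 (dot W0 W0)) as [HW0|HW0].
    2:{ exists m. intros W [<-|H] HW; [lra|auto]. }
    destruct (Req_dec_T (dot m W0) 0) as [Hz|Hnz].
    2:{ exists m. intros W [<-|H] HW; auto. }
    set (d := 1 + rsum m W0 Ws).
    assert (Hd : 1 <= d). { unfold d. pose proof (rsum_ge0 m W0 Ws). lra. }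
    exists (padd m (pscale d W0)). intros W [<-|H] HW.
    + rewrite dot_addl, dot_scalel, Hz. intro. assert (d * dot W0 W0 > 0) by nra. lra.
    + rewrite dot_addl, dot_scalel. pose proof (Hm W H HW) as HmW.
      pose proof (rsum_ge m W0 Ws W H). unfold rterm in H0.
      destruct (Req_dec_T (dot W0 W) 0) as [E|E].
      * rewrite E. rewrite Rmult_0_r, Rplus_0_r. auto.
      * assert (Rabs (dot m W) / Rabs (dot W0 W) < d) by (unfold d; lra).
        assert (Hp : 0 < Rabs (dot W0 W)) by (apply Rabs_pos_lt; auto).
        assert (Rabs (dot m W) < d * Rabs (dot W0 W)).
        { apply Rmult_lt_reg_r with (/ Rabs (dot W0 W)). apply Rinv_0_lt_compat; auto.
          rewrite Rmult_assoc, Rinv_r by lra. unfold Rdiv in H1. lra. }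
        intro C. assert (dot m W = - (d * dot W0 W)) by lra. rewrite H3 in H2.
        rewrite Rabs_Ropp, Rabs_mult, (Rabs_right d) in H2 by lra. lra. Qed.

Definition Wv (c u v : pt) : pt := padd (pscale (dot c v) u) (pscale (- dot c u) v).

Lemma Bf_Wv : forall m c u v, Bf m c u v = dot m (Wv c u v).
Proof. intros. unfold Bf, Wv. rewrite dot_addr, !dot_scaler. ring. Qed.

Lemma Wv_nonzero : forall a c z, arc_wf a -> on_arc a z -> 0 < dot c z ->
  0 < dot (Wv c (asrc a) (adst a)) (Wv c (asrc a) (adst a)).
Proof. intros a c z Hw [Hz [s [t [Hs [Ht E]]]]] Hc.
  destruct (Rle_lt_or_eq_dec 0 _ (dot_ge0 (Wv c (asrc a) (adst a)))) as [H|H]; auto.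
  symmetry in H. apply dot_eq0 in H. unfold Wv in H. apply (indep a) in H; auto. destruct H as [H1 H2].
  rewrite E in Hc. rewrite dot_addr, !dot_scaler in Hc. nra. Qed.

Lemma exists_generic : forall D A c, (forall a, In a D -> arc_wf a) ->
  (forall p, sph_hull A p -> dot c p > 0) ->
  exists m, forall a, In a D -> (exists z, on_arc a z /\ sph_interior (sph_hull A) z) -> Bf m c (asrc a) (adst a) <> 0.
Proof. intros D A c Hwf Hc. destruct (generic_vecs (map (fun a => Wv c (asrc a) (adst a)) D)) as [m Hm].
  exists m. intros a Ha [z [Hz Hi]]. rewrite Bf_Wv. apply Hm. apply (in_map (fun a => Wv c (asrc a) (adst a))); auto.
  apply Wv_nonzero with z; auto. apply int_cpos with A; auto. Qed.

Lemma popp_popp : forall p, popp (popp p) = p.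
Proof. intros; unfold popp; vring. Qed.

Lemma attractor_pole : forall D k P f A a, oriented D k P f -> attractor k P A -> In a D ->
  exists w, In w A /\ (w = f a \/ w = popp (f a)).
Proof. intros D k P f A a [HlP [HnP [HuP [HaP Hf]]]] [HlA [HnA [HinA HaA]]] Ha.
  set (phi := fun x => if excluded_middle_informative (In x P) then x else popp x).
  assert (Hinc : incl (map phi A) P).
  { intros y Hy. apply in_map_iff in Hy as [x [<- Hx]]. unfold phi.
    destruct (excluded_middle_informative (In x P)); auto. destruct (HinA x Hx); tauto. }
  assert (Hnd : NoDup (map phi A)).
  { apply NoDup_map_NoDup_ForallPairs; auto. intros x y Hx Hy E. unfold phi in E.
    destruct (excluded_middle_informative (In x P)), (excluded_middle_informative (In y P)); auto.
    - exfalso. apply (HaA x y Hx Hy). unfold antipodal. rewrite E, popp_popp; auto.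
    - exfalso. apply (HaA y x Hy Hx). unfold antipodal. rewrite <- E, popp_popp; auto.
    - rewrite <- (popp_popp x), E, popp_popp; auto. }
  assert (Hl : (length P <= length (map phi A))%nat) by (rewrite length_map; lia).
  pose proof (NoDup_length_incl Hnd Hl Hinc) as Hinc2.
  destruct (Hf a Ha) as [HfP _]. apply Hinc2 in HfP. apply in_map_iff in HfP as [w [Ew Hw]].
  exists w. split; auto. unfold phi in Ew. destruct (excluded_middle_informative (In w P)); auto.
  right. rewrite <- Ew, popp_popp; auto. Qed.

Lemma popp_unit : forall p, on_sphere p -> on_sphere (popp p).
Proof. intros; unfold on_sphere, popp in *; rewrite dot_scalel, dot_scaler, H; ring. Qed.

Lemma A_unit : forall D k P f A, oriented D k P f -> attractor k P A -> forall a, In a A -> on_sphere a.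
Proof. intros D k P f A [_ [_ [HuP _]]] [_ [_ [HinA _]]] a Ha. destruct (HinA a Ha).
  apply HuP; auto. rewrite <- (popp_popp a). apply popp_unit, HuP; auto. Qed.

Lemma A_in_H : forall D k P f A, oriented D k P f -> attractor k P A -> forall a, In a A -> sph_hull A a.
Proof. intros. split. eapply A_unit; eauto. apply cone_gen; auto. Qed.

Lemma between : forall A z r p l mu, sph_interior (sph_hull A) z -> ClH A r -> 0 < l -> 0 <= mu ->
  on_sphere p -> (exists k, 0 < k /\ pscale k p = comb l z mu r) -> sph_interior (sph_hull A) p.
Proof. intros A z r p l mu Hz Hr Hl Hm Hp [k [Hk E]].
  assert (0 < dot (comb l z mu r) (comb l z mu r)).
  { rewrite <- E, dot_scalel, dot_scaler, Hp. nra. }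
  pose proof (L1c A z r l mu Hz Hr Hl Hm H). fold (comb l z mu r) in H0. rewrite <- E in H0.
  rewrite normz_scale, normz_of_unit in H0; auto. rewrite Hp; lra. Qed.

Lemma ATT : forall D k P f A c a q, SD D -> oriented D k P f -> attractor k P A ->
  (forall p, sph_hull A p -> dot c p > 0) -> In a D -> in_relint a q -> sph_interior (sph_hull A) q ->
  sph_interior (sph_hull A) (asrc a) \/ sph_interior (sph_hull A) (adst a).
Proof. intros D k P f A c a q HSD Hor Hat Hc Ha Hrq Hiq.
  pose proof HSD as [_ [Hwf _]]. assert (Hw : arc_wf a) by auto.
  destruct (attractor_pole D k P f A a Hor Hat Ha) as [w [HwA Hwf']].
  assert (HwH : sph_hull A w) by (eapply A_in_H; eauto).
  assert (Hws : on_sphere w) by (destruct HwH; auto).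
  pose proof Hor as [_ [_ [_ [_ Hf]]]]. destruct (Hf a Ha) as [_ [Hgc [Hn1 Hn2]]].
  assert (Hnw : ~ on_arc a w) by (destruct Hwf' as [->| ->]; auto).
  assert (Hdw : dot (cross (asrc a) (adst a)) w = 0).
  { unfold on_great_circle_of in Hgc. destruct Hwf' as [->| ->]; auto. rewrite dot_poppr, Hgc; ring. }
  destruct (span_arc a w Hw Hdw) as [al [be Ew]].
  destruct Hrq as [Sq [s0 [t0 [Hs0 [Ht0 Eq]]]]].
  assert (Hcl : ClH A w) by (split; auto; intros e He; exists w; split; auto; rewrite pdist_refl; lra).
  assert (cw : 0 < dot c w) by (apply Rgt_lt, Hc; auto).
  assert (cq : 0 < dot c q) by (apply int_cpos with A; auto).
  assert (Hneg : al < 0 \/ be < 0).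
  { destruct (Rlt_le_dec al 0); auto. destruct (Rlt_le_dec be 0); auto. exfalso. apply Hnw.
    split; auto. exists al, be; auto. }
  assert (Cv : al < 0 -> s0 * be - al * t0 > 0 -> sph_interior (sph_hull A) (adst a)).
  { intros H1 H2. apply between with q w (- al) s0; auto; try lra. apply Hw.
    exists (s0 * be - al * t0). split; auto. unfold comb. rewrite Eq, Ew. vring. }
  assert (Cu : be < 0 -> t0 * al - be * s0 > 0 -> sph_interior (sph_hull A) (asrc a)).
  { intros H1 H2. apply between with q w (- be) t0; auto; try lra. apply Hw.
    exists (t0 * al - be * s0). split; auto. unfold comb. rewrite Eq, Ew. vring. }
  destruct (Rlt_le_dec al 0) as [Hal|Hal].
  - destruct (Rlt_le_dec 0 (s0 * be - al * t0)) as [H1|H1]. right; apply Cv; lra.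
    assert (Hbe : be < 0) by nra.
    destruct (Rlt_le_dec 0 (t0 * al - be * s0)) as [H2|H2]. left; apply Cu; lra.
    exfalso. assert (E : t0 * al = s0 * be) by lra.
    assert (pscale s0 w = pscale al q).
    { assert (Eb : be = t0 * al / s0) by (field_simplify_eq; lra).
      rewrite Ew, Eq, Eb. apply pt_ext; vunf; field; lra. }
    assert (s0 * dot c w = al * dot c q). { rewrite <- !dot_scaler, H; auto. }
    nra.
  - destruct Hneg as [|Hbe]; [lra|]. left; apply Cu; auto. nra.
Qed.

Lemma par_eq : forall u v p q sp tp sq tq, 0 <= sp -> 0 <= tp -> 0 <= sq -> 0 <= tq ->
  p = padd (pscale sp u) (pscale tp v) -> q = padd (pscale sq u) (pscale tq v) ->
  on_sphere p -> on_sphere q -> sp * tq - tp * sq = 0 -> p = q.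
Proof. intros u v p q sp tp sq tq H1 H2 H3 H4 Ep Eq Sp Sq D.
  destruct (Rlt_le_dec 0 tq) as [Ht|Ht].
  - assert (E : p = pscale (tp / tq) q).
    { rewrite Ep, Eq. assert (sp = tp * sq / tq) by (field_simplify_eq; lra). rewrite H. apply pt_ext; vunf; field; lra. }
    assert (tp / tq = 1). { apply (unit_scale_eq _ q); auto. apply Rmult_le_pos; auto. left; apply Rinv_0_lt_compat; auto.
      rewrite <- E; auto. }
    rewrite E, H. unfold pscale; destruct q; simpl; f_equal; ring.
  - assert (tq = 0) by lra. subst tq.
    destruct (Rlt_le_dec 0 sq) as [Hs|Hs].
    + assert (tp = 0) by nra. subst tp.
      assert (E : p = pscale (sp / sq) q). { rewrite Ep, Eq. apply pt_ext; vunf; field; lra. }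
      assert (sp / sq = 1). { apply (unit_scale_eq _ q); auto. apply Rmult_le_pos; auto. left; apply Rinv_0_lt_compat; auto.
        rewrite <- E; auto. }
      rewrite E, H. unfold pscale; destruct q; simpl; f_equal; ring.
    + assert (sq = 0) by lra. subst sq. exfalso. assert (q = pzero) by (rewrite Eq; vring).
      rewrite H in Sq. unfold on_sphere in Sq; vunf; lra. Qed.

Lemma ONE : forall D k P f A c b y y', SD D -> oriented D k P f -> attractor k P A ->
  (forall p, sph_hull A p -> dot c p > 0) -> In b D ->
  thrusts b (sph_hull A) y -> thrusts b (sph_hull A) y' -> y = y'.
Proof.
  intros D k P f A c b y y' HSD Hor Hat Hc Hb [Hy [HBy [z [Hz Hiz]]]] [Hy' [HBy' _]].
  pose proof HSD as [_ [Hwf _]]. assert (Hw : arc_wf b) by auto.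
  pose proof (bnd_not_int _ _ HBy) as Ny. pose proof (bnd_not_int _ _ HBy') as Ny'.
  pose proof (bnd_cl _ _ HBy) as Cy. pose proof (bnd_cl _ _ HBy') as Cy'.
  pose proof (int_cl _ _ Hiz) as Cz.
  destruct Hy as [Sy [s1 [t1 [Hs1 [Ht1 Ey]]]]].
  destruct Hy' as [Sy' [s2 [t2 [Hs2 [Ht2 Ey']]]]].
  destruct Hz as [Sz [s0 [t0 [Hs0 [Ht0 Ez]]]]].
  set (u := asrc b) in *. set (v := adst b) in *.
  set (Dzy := s0 * t1 - t0 * s1). set (Dzy' := s0 * t2 - t0 * s2). set (Dyy' := s1 * t2 - t1 * s2).
  assert (Id1 : pscale Dzy' y = comb Dyy' z Dzy y').
  { unfold comb, Dzy', Dyy', Dzy. rewrite Ey, Ez, Ey'. vring. }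
  assert (Id2 : pscale Dzy y' = comb (- Dyy') z Dzy' y).
  { unfold comb, Dzy', Dyy', Dzy. rewrite Ey, Ez, Ey'. vring. }
  assert (Id1n : pscale (- Dzy') y = comb (- Dyy') z (- Dzy) y').
  { unfold comb, Dzy', Dyy', Dzy. rewrite Ey, Ez, Ey'. vring. }
  assert (Id2n : pscale (- Dzy) y' = comb Dyy' z (- Dzy') y).
  { unfold comb, Dzy', Dyy', Dzy. rewrite Ey, Ez, Ey'. vring. }
  destruct (Req_dec Dzy 0) as [Z1|Z1].
  { exfalso. apply Ny. replace y with z; auto. apply (par_eq u v z y s0 t0 s1 t1); auto. }
  destruct (Req_dec Dzy' 0) as [Z2|Z2].
  { exfalso. apply Ny'. replace y' with z; auto. apply (par_eq u v z y' s0 t0 s2 t2); auto. }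
  destruct (Req_dec Dyy' 0) as [Z3|Z3].
  { apply (par_eq u v y y' s1 t1 s2 t2); auto. }
  exfalso.
  destruct (Rlt_le_dec 0 Dzy) as [P1|P1]; destruct (Rlt_le_dec 0 Dzy') as [P2|P2].
  - destruct (Rlt_le_dec 0 Dyy') as [P3|P3].
    + apply Ny. apply between with z y' Dyy' Dzy; auto; try lra. exists Dzy'; auto.
    + apply Ny'. apply between with z y (- Dyy') Dzy'; auto; try lra. exists Dzy; auto.
  - (* y more v-ward, y' more u-ward *)
    assert (s0 > 0) by (destruct (Rle_lt_or_eq_dec 0 s0 Hs0); auto; unfold Dzy in P1; subst s0; nra).
    assert (t0 > 0) by (destruct (Rle_lt_or_eq_dec 0 t0 Ht0); auto; unfold Dzy' in P2, Z2; subst t0; nra).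
    assert (Hr : in_relint b z) by (split; auto; exists s0, t0; auto).
    destruct (ATT D k P f A c b z HSD Hor Hat Hc Hb Hr Hiz) as [Hu|Hv].
    + apply Ny'. apply between with u z (- Dzy') t2; auto; try lra. exists t0. split; auto.
      unfold comb, Dzy'. rewrite Ey', Ez. vring.
    + apply Ny. apply between with v z Dzy s1; auto; try lra. exists s0. split; auto.
      unfold comb, Dzy. rewrite Ey, Ez. vring.
  - assert (s0 > 0) by (destruct (Rle_lt_or_eq_dec 0 s0 Hs0); auto; unfold Dzy' in P2; subst s0; nra).
    assert (t0 > 0) by (destruct (Rle_lt_or_eq_dec 0 t0 Ht0); auto; unfold Dzy in P1, Z1; subst t0; nra).
    assert (Hr : in_relint b z) by (split; auto; exists s0, t0; auto).
    destruct (ATT D k P f A c b z HSD Hor Hat Hc Hb Hr Hiz) as [Hu|Hv].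
    + apply Ny. apply between with u z (- Dzy) t1; auto; try lra. exists t0. split; auto.
      unfold comb, Dzy. rewrite Ey, Ez. vring.
    + apply Ny'. apply between with v z Dzy' s2; auto; try lra. exists s0. split; auto.
      unfold comb, Dzy'. rewrite Ey', Ez. vring.
  - destruct (Rlt_le_dec 0 Dyy') as [P3|P3].
    + apply Ny'. apply between with z y Dyy' (- Dzy'); auto; try lra. exists (- Dzy). split; auto; lra.
    + apply Ny. apply between with z y' (- Dyy') (- Dzy); auto; try lra. exists (- Dzy'). split; auto; lra.
Qed.

Lemma lip_refl : forall D A a x, In a D -> on_arc a x -> sph_interior (sph_hull A) x -> lipconn D A x x.
Proof. intros D A a x Ha Hx Hi. exists (fun _ => x), 0. split. lra. split.
  intros. rewrite pdist_refl. lra. split; auto. split; auto. split; intros; eauto. Qed.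

Lemma relint_dot_gt : forall b x e o, arc_wf b -> in_relint b x -> EO b e o -> -1 < dot x e.
Proof. intros b x e o Hw Hr Heo. destruct (eo_relint b e o x Heo Hr) as [s0 [t0 [Hs0 [Ht0 Eq]]]].
  assert (He : on_sphere e) by (destruct (eo_e_on b e o Hw Heo); auto).
  assert (Hx : on_sphere x) by (destruct Hr; auto).
  apply unit_dot_lt; auto. intro E. rewrite Eq in E.
  assert (padd (pscale (s0 + 1) e) (pscale t0 o) = pzero).
  { transitivity (padd (padd (pscale s0 e) (pscale t0 o)) e). vring. rewrite E. vring. }
  apply (eo_indep b e o) in H; auto. lra. Qed.

Lemma step_toward : forall D A b x e, In b D -> on_arc b x -> on_arc b e -> -1 < dot x e ->
  sph_interior (sph_hull A) x ->
  exists tau, 0 < tau <= 1 /\ sph_interior (sph_hull A) (normz (comb (1 - tau) x tau e)) /\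
    lipconn D A x (normz (comb (1 - tau) x tau e)) /\ 0 < dot (comb (1 - tau) x tau e) (comb (1 - tau) x tau e).
Proof. intros D A b x e Hb Hx He Hk Hi.
  assert (Sx : on_sphere x) by (destruct Hx; auto). assert (Se : on_sphere e) by (destruct He; auto).
  destruct (classic (sph_interior (sph_hull A) e)) as [Hie|Hnie].
  - assert (Int : forall tau, 0 < tau < 1 -> sph_interior (sph_hull A) (normz (comb (1 - tau) x tau e))).
    { intros tau Ht. unfold comb. apply L1c; auto. apply int_cl; auto. lra. lra. apply comb_pos; auto; lra. }
    exists (1/2). split. lra. split. apply Int; lra. split.
    apply seg_conn with b; auto. lra. intros; apply Int; lra. apply comb_pos; auto; lra.
  - destruct (exit A x e Sx Se Hk Hi Hnie) as [T [HT [_ Hin]]].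
    exists (T / 2). split. lra. split. apply Hin; lra. split.
    apply seg_conn with b; auto. lra. intros; apply Hin; lra. apply comb_pos; auto; lra. Qed.

Lemma dot_normz_comb : forall N p q a b, 0 < dot (comb a p b q) (comb a p b q) ->
  dot N (normz (comb a p b q)) = / nrm (comb a p b q) * (a * dot N p + b * dot N q).
Proof. intros. unfold normz. rewrite dot_scaler. unfold comb at 2. rewrite dot_addr, !dot_scaler. ring. Qed.

Lemma gamma_exists : forall (h : pt -> R) (l : list pt), (forall a, In a l -> 0 < h a) ->
  exists g, 0 < g /\ forall a, In a l -> g <= h a.
Proof. induction l; intros H. exists 1. split. lra. intros a [].
  destruct IHl as [g [Hg Hl]]. intros; apply H; simpl; auto.
  exists (Rmin g (h a)). split. apply Rmin_glb_lt; auto. apply H; simpl; auto.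
  intros b [<-|Hb]. apply Rmin_r. pose proof (Rmin_l g (h a)). pose proof (Hl b Hb). lra. Qed.

Lemma get_xprime : forall D k P f A c N x, SD D -> oriented D k P f -> attractor k P A ->
  (forall p, sph_hull A p -> dot c p > 0) -> 0 < dot N N ->
  sph_interior (sph_hull A) x -> (exists a, In a D /\ on_arc a x) ->
  exists x', sph_interior (sph_hull A) x' /\ (exists a, In a D /\ on_arc a x') /\
    lipconn D A x x' /\ dot N x' <> 0.
Proof.
  intros D k P f A c N x HSD Hor Hat Hc HN Hix [a0 [Ha0 Hxa0]].
  pose proof HSD as [_ [Hwf [_ Hbl]]].
  destruct (to_relint D a0 x HSD Ha0 Hxa0) as [b0 [Hb0 Hr0]].
  assert (Hw0 : arc_wf b0) by auto.
  assert (Hxb0 : on_arc b0 x) by (apply relint_on_arc; auto).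
  assert (Move : forall b p e o, In b D -> in_relint b p -> EO b e o -> sph_interior (sph_hull A) p ->
            dot N p = 0 -> dot N e <> 0 ->
            exists x', sph_interior (sph_hull A) x' /\ (exists a, In a D /\ on_arc a x') /\
               lipconn D A p x' /\ dot N x' <> 0).
  { intros b p e o Hb Hr Heo Hi Hp He.
    assert (Hwb : arc_wf b) by auto.
    assert (Hpb : on_arc b p) by (apply relint_on_arc; auto).
    assert (Heb : on_arc b e) by (eapply eo_e_on; eauto).
    destruct (step_toward D A b p e Hb Hpb Heb (relint_dot_gt b p e o Hwb Hr Heo) Hi) as [tau [Ht [Hi' [Hl Hpos]]]].
    exists (normz (comb (1 - tau) p tau e)). split; auto. split.
    exists b. split; auto. apply on_arc_comb; auto; lra. split; auto.
    rewrite dot_normz_comb; auto. rewrite Hp. pose proof (nrm_pos _ Hpos).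
    intro C. apply Rmult_integral in C as [C|C]. apply Rinv_neq_0_compat in C; lra. nra. }
  destruct (Req_dec (dot N x) 0) as [Nx|Nx].
  2:{ exists x. split; auto. split. exists a0; auto. split; auto. apply lip_refl with a0; auto. }
  destruct (Req_dec (dot N (asrc b0)) 0) as [Nu|Nu].
  2:{ apply (Move b0 x (asrc b0) (adst b0)); auto. left; auto. }
  destruct (Req_dec (dot N (adst b0)) 0) as [Nv|Nv].
  2:{ apply (Move b0 x (adst b0) (asrc b0)); auto. right; auto. }
  assert (Heo : exists e o, EO b0 e o /\ sph_interior (sph_hull A) e).
  { destruct (ATT D k P f A c b0 x HSD Hor Hat Hc Hb0 Hr0 Hix) as [Hu|Hv].
    exists (asrc b0), (adst b0). split; auto. left; auto.
    exists (adst b0), (asrc b0). split; auto. right; auto. }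
  destruct Heo as [e [o [Heo Hie]]].
  assert (Ne : dot N e = 0) by (destruct Heo as [[-> ->]|[-> ->]]; auto).
  assert (No : dot N o = 0) by (destruct Heo as [[-> ->]|[-> ->]]; auto).
  assert (Lxe : lipconn D A x e).
  { assert (Heb : on_arc b0 e) by (eapply eo_e_on; eauto).
    assert (Se : on_sphere e) by (destruct Heb; auto). assert (Sx : on_sphere x) by (destruct Hr0; auto).
    assert (Hk : -1 < dot x e) by (apply (relint_dot_gt b0 x e o); auto).
    assert (E1 : e = normz (comb (1 - 1) x 1 e)) by (rewrite Rminus_diag, comb_1, normz_of_unit; auto).
    rewrite E1 at 1. apply seg_conn with b0; auto. lra.
    intros tau Htau. unfold comb. apply L1c; auto. apply int_cl; auto. lra. lra.
    apply comb_pos; auto; lra. }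
  destruct (Hbl b0 e Hb0 (eo_endpoint b0 e o Heo)) as [b2 [Hb2 Hr2]].
  assert (Hw2 : arc_wf b2) by auto.
  assert (Ex2 : dot N (asrc b2) <> 0 \/ dot N (adst b2) <> 0).
  { apply NNPP. intro C. apply (overlap D b0 b2 e o HSD Hb0 Hb2 Heo Hr2).
    assert (C1 : dot N (asrc b2) = 0) by (apply NNPP; intro; apply C; left; auto).
    assert (C2 : dot N (adst b2) = 0) by (apply NNPP; intro; apply C; right; auto).
    pose proof (det_identity (asrc b2) (adst b2) o N) as E.
    rewrite !(dot_sym _ N), C1, C2, No in E.
    set (d := dot (cross (asrc b2) (adst b2)) o) in *.
    assert (pscale d N = pzero) by (rewrite E; vring).
    assert (dot (pscale d N) N = 0) by (rewrite H; apply dot_zerol).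
    rewrite dot_scalel in H0. nra. }
  assert (Move2 : exists x', sph_interior (sph_hull A) x' /\ (exists a, In a D /\ on_arc a x') /\
               lipconn D A e x' /\ dot N x' <> 0).
  { destruct Ex2 as [E2|E2].
    - apply (Move b2 e (asrc b2) (adst b2)); auto. left; auto.
    - apply (Move b2 e (adst b2) (asrc b2)); auto. right; auto. }
  destruct Move2 as [x' [H1 [H2 [H3 H4]]]]. exists x'. split; auto. split; auto. split; auto.
  apply lip_trans with e; auto.
Qed.

Lemma klt_first : forall n m c x y, klt n m c x y -> lv n c x <= lv n c y.
Proof. unfold klt; intros; lra. Qed.

Lemma thrust_cpos : forall A c g b y, HypA A c g -> thrusts b (sph_hull A) y -> 0 < dot c y.
Proof. intros A c g b y HA [_ [HB _]]. pose proof (cl_cpos A c g HA y (bnd_cl _ _ HB)).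
  destruct HA as [_ [Hg _]]. lra. Qed.

Lemma thrust_sph : forall A b y, thrusts b (sph_hull A) y -> on_sphere y.
Proof. intros A b y [_ [[Hy _] _]]; auto. Qed.

Lemma cross_orth1 : forall p q, dot (cross p q) p = 0.
Proof. intros [] []; vunf; ring. Qed.
Lemma cross_orth2 : forall p q, dot (cross p q) q = 0.
Proof. intros [] []; vunf; ring. Qed.

Theorem mainTheorem18 :
  forall (D : list arc) (k : nat) (P : list pt) (f : arc -> pt) (A : list pt) (x : pt),
    SD D -> oriented D k P f -> attractor k P A ->
    ~ total (sph_hull A) ->
    in_open_hemisphere (sph_hull A) ->
    (exists a, In a D /\ on_arc a x) ->
    sph_interior (sph_hull A) x ->
    exists (a1 a2 a3 : arc) (y1 y2 y3 : pt),
      In a1 D /\ In a2 D /\ In a3 D /\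
      a1 <> a2 /\ a1 <> a3 /\ a2 <> a3 /\
      y1 <> y2 /\ y1 <> y3 /\ y2 <> y3 /\
      thrusts a1 (sph_hull A) y1 /\ thrusts a2 (sph_hull A) y2 /\
      thrusts a3 (sph_hull A) y3 /\
      ~ (exists n, edge_normal (sph_hull A) n /\
           on_edge (sph_hull A) n y1 /\ on_edge (sph_hull A) n y2 /\
           on_edge (sph_hull A) n y3) /\
      int_connected D (sph_hull A) x y1 /\
      int_connected D (sph_hull A) x y2 /\
      int_connected D (sph_hull A) x y3.
Proof.
  intros D k P f A x HSD Hor Hat Hnt [c Hc] Hxa Hix.
  pose proof HSD as [_ [Hwf _]].
  destruct (gamma_exists (fun a => dot c a) A) as [g [Hg HgA]].
  { intros a Ha. apply Rgt_lt, Hc. eapply A_in_H; eauto. }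
  assert (HA : HypA A c g). { split. eapply A_unit; eauto. split; auto. }
  destruct (exists_generic D A c Hwf Hc) as [m Hm].
  assert (HC : Ctx D A c g m) by (split; auto).
  assert (Sx : on_sphere x) by (destruct Hix; auto).
  assert (cx : 0 < dot c x) by (apply int_cpos with A; auto).
  destruct (walk D A c g m pzero x HC Hix Hxa) as [b1 [y1 [Hb1 [Ht1 [Hl1 _]]]]].
  assert (cy1 : 0 < dot c y1) by (eapply thrust_cpos; eauto).
  assert (Sy1 : on_sphere y1) by (eapply thrust_sph; eauto).
  assert (Ny1 : ~ sph_interior (sph_hull A) y1) by (destruct Ht1 as [_ [HB _]]; apply bnd_not_int; auto).
  set (k1 := dot x y1).
  assert (Hk1 : -1 < k1 < 1).
  { unfold k1. split. apply unit_dot_lt; auto. intro E. rewrite E in cx. unfold popp in cx.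
    rewrite dot_scaler in cx. lra.
    destruct (unit_dot_bound x y1 Sx Sy1). destruct H0; auto. exfalso. apply Ny1.
    rewrite <- (unit_dot1 x y1); auto. }
  set (n2 := vsub (pscale k1 x) y1).
  destruct (walk D A c g m n2 x HC Hix Hxa) as [b2 [y2 [Hb2 [Ht2 [Hl2 Hk2]]]]].
  assert (cy2 : 0 < dot c y2) by (eapply thrust_cpos; eauto).
  assert (Sy2 : on_sphere y2) by (eapply thrust_sph; eauto).
  assert (n2x : dot n2 x = 0).
  { unfold n2. rewrite dot_subl, dot_scalel. unfold on_sphere in Sx. rewrite Sx, (dot_sym y1). unfold k1; ring. }
  assert (n2y1 : dot n2 y1 < 0).
  { unfold n2. rewrite dot_subl, dot_scalel. unfold on_sphere in Sy1. rewrite Sy1. fold k1. nra. }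
  assert (n2y2 : 0 <= dot n2 y2).
  { apply klt_first in Hk2. unfold lv in Hk2. rewrite n2x in Hk2. unfold Rdiv in Hk2. rewrite Rmult_0_l in Hk2.
    apply Rmult_le_reg_r with (/ dot c y2). apply Rinv_0_lt_compat; auto. lra. }
  assert (y12 : y1 <> y2) by (intro E; rewrite E in n2y1; lra).
  assert (Hk12 : -1 < dot y1 y2 < 1).
  { split. apply unit_dot_lt; auto. intro E. rewrite E in cy1. unfold popp in cy1.
    rewrite dot_scaler in cy1. lra.
    destruct (unit_dot_bound y1 y2 Sy1 Sy2). destruct H0; auto. exfalso. apply y12, unit_dot1; auto. }
  set (N := cross y1 y2).
  assert (HN : 0 < dot N N).
  { unfold N. rewrite lagrange. unfold on_sphere in Sy1, Sy2. rewrite Sy1, Sy2. nra. }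
  destruct (get_xprime D k P f A c N x HSD Hor Hat Hc HN Hix Hxa) as [x' [Hix' [Hx'a [Lxx' Nx']]]].
  assert (Hn3 : exists n3, dot n3 x' > 0 /\ forall z, dot n3 z > 0 -> dot N z <> 0).
  { destruct (Rlt_le_dec 0 (dot N x')) as [Pz|Pz].
    - exists N. split; auto. intros; lra.
    - exists (popp N). rewrite dot_poppl. split. lra. intros z Hz. rewrite dot_poppl in Hz. lra. }
  destruct Hn3 as [n3 [Hn3x Hn3z]].
  destruct (walk D A c g m n3 x' HC Hix' Hx'a) as [b3 [y3 [Hb3 [Ht3 [Hl3 Hk3]]]]].
  assert (cy3 : 0 < dot c y3) by (eapply thrust_cpos; eauto).
  assert (cx' : 0 < dot c x') by (apply int_cpos with A; auto).
  assert (Ny3 : dot N y3 <> 0).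
  { apply Hn3z. apply klt_first in Hk3. unfold lv in Hk3.
    assert (0 < dot n3 x' / dot c x') by (apply Rdiv_lt_0_compat; lra).
    assert (0 < dot n3 y3 / dot c y3) by lra.
    unfold Rdiv in H0. assert (0 < dot n3 y3 / dot c y3 * dot c y3) by (apply Rmult_lt_0_compat; auto).
    unfold Rdiv in H1. rewrite Rmult_assoc, Rinv_l, Rmult_1_r in H1 by lra. lra. }
  assert (Oy1 : dot N y1 = 0) by (apply cross_orth1).
  assert (Oy2 : dot N y2 = 0) by (apply cross_orth2).
  assert (y13 : y1 <> y3) by (intro E; rewrite E in Oy1; auto).
  assert (y23 : y2 <> y3) by (intro E; rewrite E in Oy2; auto).
  exists b1, b2, b3, y1, y2, y3.
  refine (conj Hb1 (conj Hb2 (conj Hb3 _))).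
  split. intro E; subst b2; apply y12; exact (ONE D k P f A c b1 y1 y2 HSD Hor Hat Hc Hb1 Ht1 Ht2).
  split. intro E; subst b3; apply y13; exact (ONE D k P f A c b1 y1 y3 HSD Hor Hat Hc Hb1 Ht1 Ht3).
  split. intro E; subst b3; apply y23; exact (ONE D k P f A c b2 y2 y3 HSD Hor Hat Hc Hb2 Ht2 Ht3).
  refine (conj y12 (conj y13 (conj y23 (conj Ht1 (conj Ht2 (conj Ht3 _)))))).
  split.
  - intros [n [[Hn0 _] [[_ E1] [[_ E2] [_ E3]]]]].
    pose proof (det_identity y1 y2 y3 n) as E. rewrite !(dot_sym _ n), E1, E2, E3 in E.
    fold N in E.
    assert (pscale (dot N y3) n = pzero) by (rewrite E; vring).
    assert (dot (pscale (dot N y3) n) n = 0) by (rewrite H; apply dot_zerol).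
    rewrite dot_scalel in H0. apply Rmult_integral in H0 as [H0|H0]; auto. apply Hn0, dot_eq0; auto.
  - split. apply lip_int_conn; auto. split. apply lip_int_conn; auto.
    apply lip_int_conn. apply lip_trans with x'; auto.
Qed.
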